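(* Let $g\ge1$. Put $u_1=0$, and let $u_2,\dots,u_{2g+1}$ be pairwise distinct nonzero complex numbers varying in a small open set. Let $\{\gamma_k\}_{k=1}^{2g}$ be a basis of the first homology of the curve $v^2=u\prod_{i=2}^{2g+1}(u-u_i)$, represented by cycles avoiding the branch points and infinity and transported continuously. Let $\gamma=\sum_k c_k\gamma_k$ with arbitrary constants $c_k\in\mathbb{C}$. Set $$a_1=-\oint_\gamma\frac{du}{v},\qquad a_i=\oint_\gamma\frac{du}{v}+u_i\oint_\gamma\frac{du}{(u-u_i)v}\quad(2\le i\le2g+1),$$ $$A^{(1)}=\begin{pmatrix}1/4&a_1\\0&-1/4\end{pmatrix},\qquad A^{(i)}=\begin{pmatrix}-1/4&a_i\\0&1/4\end{pmatrix}\quad(2\le i\le 2g+1).$$ Then these matrices satisfy the Schlesinger system with respect to the variables $u_2,\dots,u_{2g+1}$: $$\frac{\partial A^{(j)}}{\partial u_k}=\frac{[A^{(k)},A^{(j)}]}{u_k-u_j}\ (k\ge2,\ j\ne k),\qquad \frac{\partial A^{(k)}}{\partial u_k}=-\sum_{j\ne k}\frac{[A^{(k)},A^{(j)}]}{u_k-u_j}\ (k\ge 2).$$ Moreover, $A^{(\infty)}:=-\sum_{i=1}^{2g+1}A^{(i)}$ is constant. *)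

(* Defs.v *)
From Stdlib Require Import Reals Arith.
From Coquelicot Require Import Coquelicot.
Open Scope C_scope.

Fixpoint csum_from (lo n : nat) (f : nat -> C) : C :=
  match n with O => 0 | S n' => csum_from lo n' f + f (lo + n')%nat end.
Fixpoint cprod_from (lo n : nat) (f : nat -> C) : C :=
  match n with O => 1 | S n' => cprod_from lo n' f * f (lo + n')%nat end.

(* parameters: u : nat -> C, only u 2, ..., u (2g+1) are used; u_1 := 0 *)
Definition uu (u : nat -> C) (i : nat) : C := if Nat.eqb i 1 then 0 else u i.

Definition upd (u : nat -> C) (k : nat) (z : C) : nat -> C :=
  fun i => if Nat.eqb i k then z else u i.

Definition curve_rhs (g : nat) (u : nat -> C) (z : C) : C :=
  z * cprod_from 2 (2 * g) (fun i => z - u i).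

(* the parameter set: an open polydisc in the coordinates u_2..u_{2g+1} *)
Definition polydisc (g : nat) (u0 : nat -> C) (r : R) (u : nat -> C) : Prop :=
  forall i, (2 <= i <= 2 * g + 1)%nat -> (Cmod (u i - u0 i) < r)%R.

(* A closed C^1 loop t in [0,1] |-> p t in the u-plane, avoiding the branch
   points for all parameters in U, together with a continuous branch
   w u t of v along it (so (p, w) is a closed cycle on the curve), the branch
   depending continuously on the parameters (continuous transport). *)
Definition lifted_loop (g : nat) (U : (nat -> C) -> Prop)
  (p dp : R -> C) (w : (nat -> C) -> R -> C) : Prop :=
  p 0%R = p 1%R /\
  (forall t, (0 <= t <= 1)%R -> is_derive (K := R_AbsRing) p t (dp t)) /\
  (forall t, (0 <= t <= 1)%R -> continuous dp t) /\
  (forall u, U u -> forall t, (0 <= t <= 1)%R ->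
      p t <> 0 /\ forall i, (2 <= i <= 2 * g + 1)%nat -> p t <> u i) /\
  (forall u, U u -> forall t, (0 <= t <= 1)%R ->
      w u t * w u t = curve_rhs g u (p t)) /\
  (forall u, U u -> w u 0%R = w u 1%R) /\
  (forall u, U u -> forall t, (0 <= t <= 1)%R -> continuous (w u) t) /\
  (forall t, (0 <= t <= 1)%R -> forall u, U u -> forall eps : R, (0 < eps)%R ->
     exists delta : R, (0 < delta)%R /\ forall u', U u' ->
       (forall i, (2 <= i <= 2 * g + 1)%nat -> (Cmod (u' i - u i) < delta)%R) ->
       (Cmod (w u' t - w u t) < eps)%R).

(* oint_gamma f(u) du / v  for gamma = sum_{k<m} c_k gamma_k *)
Definition period (m : nat) (c : nat -> C) (p dp : nat -> R -> C)
  (w : nat -> (nat -> C) -> R -> C) (u : nat -> C) (f : C -> C) : C :=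
  csum_from 0 m (fun k =>
    c k * RInt (V := C_R_CompleteNormedModule)
                 (fun t => f (p k t) * dp k t / w k u t) 0%R 1%R).

Definition acoef m c p dp w (u : nat -> C) (i : nat) : C :=
  if Nat.eqb i 1 then - period m c p dp w u (fun _ => 1)
  else period m c p dp w u (fun _ => 1)
       + u i * period m c p dp w u (fun z => / (z - u i)).

Record mat2 := Mat2 { m11 : C; m12 : C; m21 : C; m22 : C }.
Definition mmul (A B : mat2) : mat2 :=
  Mat2 (m11 A * m11 B + m12 A * m21 B) (m11 A * m12 B + m12 A * m22 B)
       (m21 A * m11 B + m22 A * m21 B) (m21 A * m12 B + m22 A * m22 B).
Definition madd (A B : mat2) : mat2 :=
  Mat2 (m11 A + m11 B) (m12 A + m12 B) (m21 A + m21 B) (m22 A + m22 B).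
Definition mscale (s : C) (A : mat2) : mat2 :=
  Mat2 (s * m11 A) (s * m12 A) (s * m21 A) (s * m22 A).
Definition mopp (A : mat2) : mat2 := mscale (-1) A.
Definition mzero : mat2 := Mat2 0 0 0 0.
Definition mcomm (A B : mat2) : mat2 := madd (mmul A B) (mopp (mmul B A)).
Fixpoint msum_from (lo n : nat) (f : nat -> mat2) : mat2 :=
  match n with O => mzero | S n' => madd (msum_from lo n' f) (f (lo + n')%nat) end.

Definition is_mderiv (F : C -> mat2) (z : C) (M : mat2) : Prop :=
  is_derive (K := C_AbsRing) (fun z => m11 (F z)) z (m11 M) /\
  is_derive (K := C_AbsRing) (fun z => m12 (F z)) z (m12 M) /\
  is_derive (K := C_AbsRing) (fun z => m21 (F z)) z (m21 M) /\
  is_derive (K := C_AbsRing) (fun z => m22 (F z)) z (m22 M).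

Definition Amat m c p dp w (u : nat -> C) (i : nat) : mat2 :=
  if Nat.eqb i 1 then Mat2 (RtoC (1/4)) (acoef m c p dp w u 1) 0 (RtoC (-1/4))
  else Mat2 (RtoC (-1/4)) (acoef m c p dp w u i) 0 (RtoC (1/4)).

Definition Ainf (g : nat) m c p dp w (u : nat -> C) : mat2 :=
  mopp (msum_from 1 (2 * g + 1) (fun i => Amat m c p dp w u i)).

(* Main.v *)
Require Import Defs.
From Stdlib Require Import Reals Arith Lia Lra FunctionalExtensionality ClassicalDescription.
From Coquelicot Require Import Coquelicot.
Open Scope C_scope.

Definition cc {X : Type} (dist : X -> X -> R) (h : X -> C) (x : X) : Prop :=
  forall eps : R, (0 < eps)%R -> exists del : R, (0 < del)%R /\
    forall x', (dist x' x < del)%R -> (Cmod (h x' - h x) < eps)%R.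
Definition dR (a b : R) : R := Rabs (a - b).
Definition dC (a b : C) : R := Cmod (a - b).

Lemma sqrt2_lt_2 : (sqrt 2 < 2)%R.
Proof.
  apply Rsqr_incrst_0; try lra. rewrite Rsqr_sqrt; unfold Rsqr; lra.
  apply sqrt_pos.
Qed.

Lemma cont_ccR h t : continuous h t -> cc dR h t.
Proof.
  intros H eps Heps.
  assert (Hl : locally (h t) (fun y => (Cmod (y - h t) < eps)%R)).
  { exists (mkposreal (eps/2) ltac:(lra)). intros y Hy.
    apply C_NormedModule_mixin_compat2 in Hy. simpl in Hy.
    pose proof sqrt2_lt_2. change (minus y (h t)) with (y - h t) in Hy.
    assert (sqrt 2 * (eps/2) < eps)%R by nra. lra. }
  destruct (H _ Hl) as [d Hd]. exists d. split. apply cond_pos.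
  intros t' Ht'. apply Hd. exact Ht'.
Qed.

Lemma ccR_cont h t : cc dR h t -> continuous h t.
Proof.
  intros H P [e He].
  destruct (H e (cond_pos e)) as [d [Hd Hd']].
  exists (mkposreal d Hd). intros t' Ht'. apply He.
  apply C_NormedModule_mixin_compat1. apply Hd'. exact Ht'.
Qed.

Lemma Cmod_sym (a b : C) : Cmod (a - b) = Cmod (b - a).
Proof. replace (a - b) with (- (b - a)) by ring. apply Cmod_opp. Qed.

Lemma Cmod_tri3 (a b c : C) : (Cmod (a - c) <= Cmod (a - b) + Cmod (b - c))%R.
Proof. replace (a - c) with ((a - b) + (b - c)) by ring. apply Cmod_triangle. Qed.

Lemma Cmod_le_add (a b : C) : (Cmod a <= Cmod b + Cmod (a - b))%R.
Proof. replace a with (b + (a - b)) at 1 by ring. apply Cmod_triangle. Qed.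

Section CC.
Context {X : Type} (dist : X -> X -> R).

Lemma cc_const (c : C) x : cc dist (fun _ => c) x.
Proof. intros e He. exists 1%R. split; [lra|]. intros. replace (c - c) with (RtoC 0) by ring.
  rewrite Cmod_0. lra. Qed.

Lemma cc_plus f g x : cc dist f x -> cc dist g x -> cc dist (fun y => f y + g y) x.
Proof.
  intros Hf Hg e He.
  destruct (Hf (e/2)%R ltac:(lra)) as [d1 [Hd1 H1]].
  destruct (Hg (e/2)%R ltac:(lra)) as [d2 [Hd2 H2]].
  exists (Rmin d1 d2). split. apply Rmin_pos; auto.
  intros y Hy. specialize (H1 y (Rlt_le_trans _ _ _ Hy (Rmin_l _ _))).
  specialize (H2 y (Rlt_le_trans _ _ _ Hy (Rmin_r _ _))).
  replace (f y + g y - (f x + g x)) with ((f y - f x) + (g y - g x)) by ring.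
  eapply Rle_lt_trans. apply Cmod_triangle. lra.
Qed.

Lemma cc_opp f x : cc dist f x -> cc dist (fun y => - f y) x.
Proof.
  intros Hf e He. destruct (Hf e He) as [d [Hd H]]. exists d. split; auto.
  intros y Hy. replace (- f y - - f x) with (- (f y - f x)) by ring.
  rewrite Cmod_opp. auto.
Qed.

Lemma cc_minus f g x : cc dist f x -> cc dist g x -> cc dist (fun y => f y - g y) x.
Proof. intros. apply (cc_plus f (fun y => - g y)); auto. apply cc_opp; auto. Qed.

Lemma cc_mult f g x : cc dist f x -> cc dist g x -> cc dist (fun y => f y * g y) x.
Proof.
  intros Hf Hg e He.
  set (A := Cmod (f x)). set (B := Cmod (g x)).
  assert (HA : (0 <= A)%R) by apply Cmod_ge_0.
  assert (HB : (0 <= B)%R) by apply Cmod_ge_0.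
  destruct (Hf (Rmin 1 (e / (2 * (B + 1))))%R) as [d1 [Hd1 H1]].
  { apply Rmin_pos; [lra|]. apply Rdiv_lt_0_compat; lra. }
  destruct (Hg (e / (2 * (A + 1)))%R) as [d2 [Hd2 H2]].
  { apply Rdiv_lt_0_compat; lra. }
  exists (Rmin d1 d2). split. apply Rmin_pos; auto.
  intros y Hy. specialize (H1 y (Rlt_le_trans _ _ _ Hy (Rmin_l _ _))).
  specialize (H2 y (Rlt_le_trans _ _ _ Hy (Rmin_r _ _))).
  replace (f y * g y - f x * g x) with (f y * (g y - g x) + (f y - f x) * g x) by ring.
  eapply Rle_lt_trans. apply Cmod_triangle. rewrite !Cmod_mult.
  assert (Hfy : (Cmod (f y) <= A + 1)%R).
  { pose proof (Cmod_le_add (f y) (f x)). pose proof (Rmin_l 1 (e / (2 * (B + 1)))). fold A in H. lra. }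
  assert (Hm : (Cmod (f y - f x) < e / (2 * (B + 1)))%R).
  { eapply Rlt_le_trans. apply H1. apply Rmin_r. }
  assert (P1 : (Cmod (f y) * Cmod (g y - g x) < e/2)%R).
  { apply Rle_lt_trans with ((A+1) * Cmod (g y - g x))%R.
    apply Rmult_le_compat_r; [apply Cmod_ge_0|lra].
    apply Rlt_le_trans with ((A+1) * (e / (2 * (A + 1))))%R.
    apply Rmult_lt_compat_l; lra. right; field; lra. }
  assert (P2 : (Cmod (f y - f x) * B <= e/2)%R).
  { apply Rle_trans with ((e / (2 * (B + 1))) * (B+1))%R.
    apply Rmult_le_compat; try apply Cmod_ge_0; lra. right; field; lra. }
  fold B. lra.
Qed.

Lemma cc_inv f x : cc dist f x -> f x <> 0 -> cc dist (fun y => / f y) x.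
Proof.
  intros Hf Hnz e He.
  set (A := Cmod (f x)).
  assert (HA : (0 < A)%R) by (apply Cmod_gt_0; auto).
  destruct (Hf (Rmin (A/2) (e * A * A / 2))%R) as [d [Hd H1]].
  { apply Rmin_pos; [lra|]. apply Rdiv_lt_0_compat; [|lra]. apply Rmult_lt_0_compat; nra. }
  exists d. split; auto. intros y Hy. specialize (H1 y Hy).
  assert (Hy1 : (Cmod (f y - f x) < A/2)%R) by (eapply Rlt_le_trans; [apply H1|apply Rmin_l]).
  assert (Hy2 : (Cmod (f y - f x) < e*A*A/2)%R) by (eapply Rlt_le_trans; [apply H1|apply Rmin_r]).
  assert (Hfy : (A/2 < Cmod (f y))%R).
  { pose proof (Cmod_le_add (f x) (f y)). rewrite Cmod_sym in H. fold A in H. lra. }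
  assert (Hfy0 : f y <> 0). { intro Z. rewrite Z, Cmod_0 in Hfy. lra. }
  replace (/ f y - / f x) with ((f x - f y) / (f y * f x)) by (field; auto).
  rewrite Cmod_div by (apply Cmult_neq_0; auto). rewrite Cmod_mult, Cmod_sym. fold A.
  apply Rlt_le_trans with ((e*A*A/2) / (Cmod (f y) * A))%R.
  { unfold Rdiv. apply Rmult_lt_compat_r; auto. apply Rinv_0_lt_compat. nra. }
  apply Rle_trans with ((e*A*A/2) / (A/2 * A))%R.
  { unfold Rdiv. apply Rmult_le_compat_l. nra. apply Rinv_le_contravar; nra. }
  right. field. lra.
Qed.

Lemma cc_compC (f : C -> C) (h : X -> C) x :
  cc dist h x -> cc dC f (h x) -> cc dist (fun y => f (h y)) x.
Proof.
  intros Hh Hf e He. destruct (Hf e He) as [d1 [Hd1 H1]].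
  destruct (Hh d1 Hd1) as [d2 [Hd2 H2]]. exists d2. split; auto.
  intros y Hy. apply H1. apply H2. auto.
Qed.
End CC.

Lemma ccC_id z : cc dC (fun y => y) z.
Proof. intros e He. exists e. split; auto. Qed.

Ltac toC := match goal with |- ?a = ?b => change (@eq C a b) end.

Lemma normCR (a : C) : @norm R_AbsRing C_R_CompleteNormedModule a = Cmod a.
Proof. destruct a as [x y]. unfold norm; simpl. unfold prod_norm, Cmod. simpl. f_equal.
 unfold norm; simpl. unfold abs; simpl.
 rewrite !Rmult_1_r, <- !Rabs_mult, !(Rabs_pos_eq (_*_)) by nra. reflexivity. Qed.

Lemma normCP (a : C) : @norm R_AbsRing (prod_NormedModule R_AbsRing R_NormedModule R_NormedModule) a = Cmod a.
Proof. apply normCR. Qed.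

Lemma carathC (f h : C -> C) z0 del : (0 < del)%R ->
  (forall z, (Cmod (z - z0) < del)%R -> f z = f z0 + (z - z0) * h z) ->
  cc dC h z0 -> is_derive (K := C_AbsRing) f z0 (h z0).
Proof.
  intros Hd Hf Hh. split. apply is_linear_scal_l.
  intros x Hx. apply (@is_filter_lim_locally_unique C_AbsRing (AbsRing_NormedModule C_AbsRing)) in Hx. subst x.
  intros eps. destruct (Hh eps (cond_pos eps)) as [d [Hd' Hh']].
  exists (mkposreal (Rmin del d / 2) ltac:(pose proof (Rmin_pos _ _ Hd Hd'); lra)). intros y Hy.
  assert (Hy' : (Cmod (y - z0) < Rmin del d)%R).
  { assert (Cmod (y - z0) < Rmin del d / 2)%R by exact Hy. pose proof (Rmin_pos _ _ Hd Hd'). lra. }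
  change (Cmod (f y - f z0 - (y - z0) * h z0) <= eps * Cmod (y - z0))%R.
  rewrite (Hf y) by (eapply Rlt_le_trans; [apply Hy'|apply Rmin_l]).
  replace (f z0 + (y - z0) * h y - f z0 - (y - z0) * h z0) with ((y - z0) * (h y - h z0)) by ring.
  rewrite Cmod_mult. rewrite Rmult_comm. apply Rmult_le_compat_r. apply Cmod_ge_0.
  left. apply Hh'. eapply Rlt_le_trans; [apply Hy'|apply Rmin_r].
Qed.

Lemma carathR (f h : R -> C) t del : (0 < del)%R ->
  (forall s, (Rabs (s - t) < del)%R -> f s = f t + RtoC (s - t) * h s) ->
  cc dR h t -> is_derive (K := R_AbsRing) f t (h t).
Proof.
  intros Hd Hf Hh. split. apply is_linear_scal_l.
  intros x Hx. apply (@is_filter_lim_locally_unique R_AbsRing (AbsRing_NormedModule R_AbsRing)) in Hx. subst x.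
  intros eps. destruct (Hh eps (cond_pos eps)) as [d [Hd' Hh']].
  exists (mkposreal (Rmin del d) (Rmin_pos _ _ Hd Hd')). intros y Hy.
  assert (Hy' : (Rabs (y - t) < Rmin del d)%R) by exact Hy.
  rewrite normCP, scal_R_Cmult.
  change (Cmod (f y - f t - RtoC (y - t) * h t) <= eps * Rabs (y - t))%R.
  rewrite (Hf y) by (eapply Rlt_le_trans; [apply Hy'|apply Rmin_l]).
  replace (f t + RtoC (y - t) * h y - f t - RtoC (y - t) * h t) with (RtoC (y - t) * (h y - h t)) by ring.
  rewrite Cmod_mult, Cmod_R. rewrite Rmult_comm. apply Rmult_le_compat_r. apply Rabs_pos.
  left. apply Hh'. unfold dR. eapply Rlt_le_trans; [apply Hy'|apply Rmin_r].
Qed.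

Lemma slopeC_of_derive (f : C -> C) (z0 l : C) : is_derive (K := C_AbsRing) f z0 l ->
  exists h, h z0 = l /\ (forall z, f z = f z0 + (z - z0) * h z) /\ cc dC h z0.
Proof.
  intros [_ H]. specialize (H z0 (fun P HP => HP)).
  exists (fun z => if Ceq_dec z z0 then l else (f z - f z0) / (z - z0)).
  split; [|split].
  - destruct (Ceq_dec z0 z0); congruence.
  - intros z. destruct (Ceq_dec z z0). subst; ring. field.
    intro E. apply n. replace z with ((z - z0) + z0) by ring. rewrite E. ring.
  - intros eps Heps. destruct (H (mkposreal (eps/2) ltac:(lra))) as [d Hd].
    exists d. split. apply cond_pos. intros z Hz. unfold dC in Hz.
    destruct (Ceq_dec z0 z0) as [_|C]; [|congruence].
    destruct (Ceq_dec z z0) as [E|E].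
    + replace (l - l) with (RtoC 0) by ring. rewrite Cmod_0. lra.
    + assert (Hz0 : z - z0 <> 0).
      { intro Z. apply E. replace z with ((z - z0) + z0) by ring. rewrite Z. ring. }
      specialize (Hd z Hz). simpl in Hd.
      change (Cmod (f z - f z0 - (z - z0) * l) <= eps / 2 * Cmod (z - z0))%R in Hd.
      replace ((f z - f z0) / (z - z0) - l) with ((f z - f z0 - (z - z0) * l) / (z - z0)) by (field; auto).
      rewrite Cmod_div by auto.
      assert (0 < Cmod (z - z0))%R by (apply Cmod_gt_0; auto).
      apply Rle_lt_trans with (eps/2)%R; [|lra].
      unfold Rdiv. apply Rmult_le_reg_r with (Cmod (z - z0)); auto.
      rewrite Rmult_assoc, Rinv_l by lra. lra.
Qed.

Lemma slopeR_of_derive (f : R -> C) (t : R) (l : C) : is_derive (K := R_AbsRing) f t l ->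
  exists h, h t = l /\ (forall s, f s = f t + RtoC (s - t) * h s) /\ cc dR h t.
Proof.
  intros [_ H]. specialize (H t (fun P HP => HP)).
  exists (fun s => if Req_EM_T s t then l else (f s - f t) / RtoC (s - t)).
  split; [|split].
  - destruct (Req_EM_T t t); congruence.
  - intros s. destruct (Req_EM_T s t). subst. replace (t - t)%R with 0%R by ring. ring. field.
    intro E. apply RtoC_inj in E. apply n. lra.
  - intros eps Heps. destruct (H (mkposreal (eps/2) ltac:(lra))) as [d Hd].
    exists d. split. apply cond_pos. intros s Hs. unfold dR in Hs.
    destruct (Req_EM_T t t) as [_|C]; [|congruence].
    destruct (Req_EM_T s t) as [E|E].
    + replace (l - l) with (RtoC 0) by ring. rewrite Cmod_0. lra.
    + assert (Hz0 : RtoC (s - t) <> 0).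
      { intro Z. apply RtoC_inj in Z. apply E. lra. }
      specialize (Hd s Hs). simpl in Hd. rewrite normCP, scal_R_Cmult in Hd.
      change (Cmod (f s - f t - RtoC (s - t) * l) <= eps / 2 * Rabs (s - t))%R in Hd.
      replace ((f s - f t) / RtoC (s - t) - l) with ((f s - f t - RtoC (s - t) * l) / RtoC (s - t)) by (field; auto).
      rewrite Cmod_div by auto. rewrite Cmod_R.
      assert (0 < Rabs (s - t))%R by (apply Rabs_pos_lt; lra).
      apply Rle_lt_trans with (eps/2)%R; [|lra].
      unfold Rdiv. apply Rmult_le_reg_r with (Rabs (s - t)); auto.
      rewrite Rmult_assoc, Rinv_l by lra. lra.
Qed.

Definition slopeR (f : R -> C) (t : R) (h : R -> C) : Prop :=
  (exists del, (0 < del)%R /\ forall s, (Rabs (s - t) < del)%R -> f s = f t + RtoC (s - t) * h s)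
  /\ cc dR h t.

Lemma slopeR_derive f t h : slopeR f t h -> is_derive (K := R_AbsRing) f t (h t).
Proof. intros [[d [Hd H]] Hc]. eapply carathR; eauto. Qed.

Lemma derive_slopeR (f : R -> C) t (l : C) : is_derive (K := R_AbsRing) f t l ->
  exists h, h t = l /\ slopeR f t h.
Proof.
  intros H. destruct (slopeR_of_derive f t l H) as [h [H1 [H2 H3]]].
  exists h. split; auto. split; auto. exists 1%R. split; [lra|]. auto.
Qed.

Lemma slopeR_cc f t h : slopeR f t h -> cc dR f t.
Proof.
  intros [[d [Hd H]] Hc] e He.
  destruct (Hc 1%R ltac:(lra)) as [d1 [Hd1 H1]].
  set (M := (Cmod (h t) + 1)%R).
  assert (HM : (0 < M)%R) by (unfold M; pose proof (Cmod_ge_0 (h t)); lra).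
  exists (Rmin (Rmin d d1) (e / M)). split.
  { apply Rmin_pos. apply Rmin_pos; auto. apply Rdiv_lt_0_compat; auto. }
  intros s Hs. unfold dR in Hs.
  assert (Hs1 : (Rabs (s - t) < d)%R) by (eapply Rlt_le_trans; [apply Hs|]; eapply Rle_trans; [apply Rmin_l|apply Rmin_l]).
  assert (Hs2 : (Rabs (s - t) < d1)%R) by (eapply Rlt_le_trans; [apply Hs|]; eapply Rle_trans; [apply Rmin_l|apply Rmin_r]).
  assert (Hs3 : (Rabs (s - t) < e / M)%R) by (eapply Rlt_le_trans; [apply Hs|apply Rmin_r]).
  rewrite (H s Hs1). replace (f t + RtoC (s - t) * h s - f t) with (RtoC (s - t) * h s) by ring.
  rewrite Cmod_mult, Cmod_R.
  assert (Hh : (Cmod (h s) <= M)%R).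
  { pose proof (Cmod_le_add (h s) (h t)). specialize (H1 s Hs2). unfold M. lra. }
  apply Rle_lt_trans with (Rabs (s - t) * M)%R.
  apply Rmult_le_compat_l; auto. apply Rabs_pos.
  apply Rlt_le_trans with (e / M * M)%R. apply Rmult_lt_compat_r; auto.
  right. field. lra.
Qed.

Lemma cc_nonzero_near {X} (dist : X -> X -> R) f x : cc dist f x -> f x <> 0 ->
  exists d, (0 < d)%R /\ forall y, (dist y x < d)%R -> f y <> 0.
Proof.
  intros Hc Hn. assert (0 < Cmod (f x))%R by (apply Cmod_gt_0; auto).
  destruct (Hc (Cmod (f x))) as [d [Hd H1]]; auto.
  exists d. split; auto. intros y Hy Z. specialize (H1 y Hy). rewrite Z in H1.
  replace (0 - f x) with (- f x) in H1 by ring. rewrite Cmod_opp in H1. lra.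
Qed.

Lemma slopeR_mult f g t h k : slopeR f t h -> slopeR g t k ->
  slopeR (fun s => f s * g s) t (fun s => h s * g s + f t * k s).
Proof.
  intros Hf Hg. pose proof (slopeR_cc _ _ _ Hg) as Gc.
  destruct Hf as [[d1 [Hd1 H1]] C1]. destruct Hg as [[d2 [Hd2 H2]] C2].
  split.
  - exists (Rmin d1 d2). split. apply Rmin_pos; auto. intros s Hs.
    rewrite (H1 s) by (eapply Rlt_le_trans; [apply Hs|apply Rmin_l]).
    rewrite (H2 s) by (eapply Rlt_le_trans; [apply Hs|apply Rmin_r]).
    rewrite <- (H2 s) by (eapply Rlt_le_trans; [apply Hs|apply Rmin_r]). 
    replace (f t + RtoC (s - t) * h s) with (f t + RtoC (s - t) * h s) by reflexivity.
    rewrite (H2 s) by (eapply Rlt_le_trans; [apply Hs|apply Rmin_r]). ring.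
  - apply cc_plus. apply cc_mult; auto. apply cc_mult; auto. apply cc_const.
Qed.

Lemma slopeR_inv f t h : slopeR f t h -> f t <> 0 ->
  slopeR (fun s => / f s) t (fun s => - h s * / (f s * f t)).
Proof.
  intros Hf Hn. pose proof (slopeR_cc _ _ _ Hf) as Fc.
  destruct (cc_nonzero_near _ _ _ Fc Hn) as [d0 [Hd0 N0]].
  destruct Hf as [[d1 [Hd1 H1]] C1].
  split.
  - exists (Rmin d0 d1). split. apply Rmin_pos; auto. intros s Hs.
    assert (Fs : f s <> 0) by (apply N0; eapply Rlt_le_trans; [apply Hs|apply Rmin_l]).
    assert (E := H1 s ltac:(eapply Rlt_le_trans; [apply Hs|apply Rmin_r])).
    assert (E' : RtoC (s - t) * h s = f s - f t) by (rewrite E; ring).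
    replace (/ f t + RtoC (s - t) * (- h s * / (f s * f t))) with (/ f t - (RtoC (s - t) * h s) / (f s * f t)) by (field; auto).
    rewrite E'. field. auto.
  - apply cc_mult. apply cc_opp; auto. apply cc_inv. apply cc_mult; auto. apply cc_const.
    apply Cmult_neq_0; auto.
Qed.

Lemma slopeR_compC (x : R -> C) t hx (P : C -> C) l :
  slopeR x t hx -> is_derive (K := C_AbsRing) P (x t) l ->
  exists h, h t = hx t * l /\ slopeR (fun s => P (x s)) t h.
Proof.
  intros Hx HP. pose proof (slopeR_cc _ _ _ Hx) as Xc.
  destruct (slopeC_of_derive P (x t) l HP) as [hP [E1 [E2 E3]]].
  exists (fun s => hx s * hP (x s)). split. rewrite E1; auto.
  destruct Hx as [[d [Hd H]] C1]. split.
  - exists d. split; auto. intros s Hs.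
    assert (Hxs : x s - x t = RtoC (s - t) * hx s) by (rewrite (H s Hs) at 1; ring).
    rewrite (E2 (x s)), Hxs. ring.
  - apply cc_mult; auto. apply cc_compC; auto.
Qed.

Lemma slopeR_sq (W Q : R -> C) t hQ : cc dR W t -> W t <> 0 -> slopeR Q t hQ ->
  (exists d, (0 < d)%R /\ forall s, (Rabs (s - t) < d)%R -> W s * W s = Q s) ->
  slopeR W t (fun s => hQ s / (W s + W t)).
Proof.
  intros Wc Wn [[d1 [Hd1 H1]] C1] [d2 [Hd2 H2]].
  assert (Sc : cc dR (fun s => W s + W t) t) by (apply cc_plus; auto; apply cc_const).
  assert (Sn : W t + W t <> 0).
  { replace (W t + W t) with (2 * W t) by ring. apply Cmult_neq_0; auto.
    intro Z. apply RtoC_inj in Z. lra. }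
  destruct (cc_nonzero_near _ _ _ Sc Sn) as [d0 [Hd0 N0]].
  split.
  - exists (Rmin d0 (Rmin d1 d2)). split. repeat apply Rmin_pos; auto. intros s Hs.
    assert (Hs0 : (Rabs (s - t) < d0)%R) by (eapply Rlt_le_trans; [apply Hs|apply Rmin_l]).
    assert (Hs1 : (Rabs (s - t) < d1)%R) by (eapply Rlt_le_trans; [apply Hs|]; eapply Rle_trans; [apply Rmin_r|apply Rmin_l]).
    assert (Hs2 : (Rabs (s - t) < d2)%R) by (eapply Rlt_le_trans; [apply Hs|]; eapply Rle_trans; [apply Rmin_r|apply Rmin_r]).
    assert (Ht2 : (Rabs (t - t) < d2)%R) by (replace (t - t)%R with 0%R by ring; rewrite Rabs_R0; auto).
    specialize (N0 s Hs0).
    assert (E : RtoC (s - t) * hQ s = W s * W s - W t * W t).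
    { rewrite (H2 s Hs2), (H2 t Ht2), (H1 s Hs1). ring. }
    replace (W t + RtoC (s - t) * (hQ s / (W s + W t))) with (W t + (RtoC (s - t) * hQ s) / (W s + W t)) by (field; auto).
    rewrite E. field. auto.
  - apply cc_mult; auto. apply cc_inv; auto.
Qed.

Notation RIntC f a b := (RInt (V := C_R_CompleteNormedModule) f a b).

Lemma Cmod_eps_eq (X Y : C) : (forall e, (0 < e)%R -> (Cmod (X - Y) < e)%R) -> X = Y.
Proof.
  intros H. assert (Cmod (X - Y) = 0%R).
  { destruct (Rle_lt_or_eq_dec 0 (Cmod (X - Y)) (Cmod_ge_0 _)) as [Hl|He]; auto.
    specialize (H _ Hl). lra. }
  apply Cmod_eq_0 in H0. replace X with ((X - Y) + Y) by ring. rewrite H0. ring.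
Qed.

Lemma exRInt_cont (f : R -> C) a b : (0 <= a)%R -> (a <= b)%R -> (b <= 1)%R ->
  (forall t, (0 <= t <= 1)%R -> continuous f t) ->
  ex_RInt (V := C_R_CompleteNormedModule) f a b.
Proof.
  intros Ha Hab Hb Hc. apply ex_RInt_continuous. intros z Hz.
  rewrite Rmin_left in Hz by lra. rewrite Rmax_right in Hz by lra. apply Hc. lra.
Qed.

Lemma RInt_small (f : R -> C) a b M : (0 <= a)%R -> (a <= b)%R -> (b <= 1)%R ->
  (forall t, (0 <= t <= 1)%R -> continuous f t) ->
  (forall t, (0 <= t <= 1)%R -> (Cmod (f t) <= M)%R) ->
  (Cmod (RIntC f a b) <= (b - a) * M)%R.
Proof.
  intros Ha Hab Hb Hc HM. rewrite <- normCR.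
  apply (norm_RInt_le_const (V := C_R_CompleteNormedModule) f a b). auto. intros x Hx. rewrite normCR. apply HM. lra.
  apply RInt_correct. apply exRInt_cont; auto.
Qed.

Lemma ftc01 (f G : R -> C) :
  (forall t, (0 <= t <= 1)%R -> continuous f t) ->
  (forall t, (0 <= t <= 1)%R -> cc dR G t) ->
  (forall t, (0 < t < 1)%R -> is_derive (K := R_AbsRing) G t (f t)) ->
  RIntC f 0 1 = G 1%R - G 0%R.
Proof.
  intros Hf HG HD.
  assert (HM : exists M, (0 < M)%R /\ forall t, (0 <= t <= 1)%R -> (Cmod (f t) <= M)%R).
  { destruct (bounded_continuity (V := C_R_CompleteNormedModule) f 0 1) as [M HM].
    intros t Ht. apply Hf; auto.
    exists (Rabs M + 1)%R. split. pose proof (Rabs_pos M); lra.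
    intros t Ht. specialize (HM t Ht). rewrite normCR in HM.
    pose proof (Rle_abs M). lra. }
  destruct HM as [M [HM0 HM]].
  apply Cmod_eps_eq. intros e He.
  destruct (HG 0%R ltac:(lra) (e/4)%R ltac:(lra)) as [d0 [Hd0 H0]].
  destruct (HG 1%R ltac:(lra) (e/4)%R ltac:(lra)) as [d1 [Hd1 H1]].
  set (a := Rmin (Rmin (1/3) (d0/2)) (e / (8 * M))).
  set (b := (1 - Rmin (Rmin (1/3) (d1/2)) (e / (8 * M)))%R).
  assert (Ea : (0 < e / (8 * M))%R) by (apply Rdiv_lt_0_compat; lra).
  assert (Ha0 : (0 < a)%R) by (unfold a; repeat apply Rmin_pos; lra).
  assert (Ha1 : (a <= 1/3)%R) by (unfold a; eapply Rle_trans; [apply Rmin_l|apply Rmin_l]).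
  assert (Ha2 : (a <= d0/2)%R) by (unfold a; eapply Rle_trans; [apply Rmin_l|apply Rmin_r]).
  assert (Ha3 : (a <= e / (8 * M))%R) by (unfold a; apply Rmin_r).
  assert (Hb0 : (b < 1)%R) by (unfold b; assert (0 < Rmin (Rmin (1/3) (d1/2)) (e / (8 * M)))%R by (repeat apply Rmin_pos; lra); lra).
  assert (Hb1 : (2/3 <= b)%R) by (unfold b; assert (Rmin (Rmin (1/3) (d1/2)) (e / (8 * M)) <= 1/3)%R by (eapply Rle_trans; [apply Rmin_l|apply Rmin_l]); lra).
  assert (Hb2 : (1 - b <= d1/2)%R) by (unfold b; assert (Rmin (Rmin (1/3) (d1/2)) (e / (8 * M)) <= d1/2)%R by (eapply Rle_trans; [apply Rmin_l|apply Rmin_r]); lra).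
  assert (Hb3 : (1 - b <= e / (8 * M))%R) by (unfold b; assert (Rmin (Rmin (1/3) (d1/2)) (e / (8 * M)) <= e / (8 * M))%R by apply Rmin_r; lra).
  assert (Imid : RIntC f a b = G b - G a).
  { apply is_RInt_unique.
    assert (HH := is_RInt_derive (V := C_R_CompleteNormedModule) G f a b).
    apply HH.
    - intros x Hx. rewrite Rmin_left in Hx by lra. rewrite Rmax_right in Hx by lra.
      apply HD. lra.
    - intros x Hx. rewrite Rmin_left in Hx by lra. rewrite Rmax_right in Hx by lra.
      apply Hf. lra. }
  assert (Hsplit : RIntC f 0 1 = RIntC f 0 a + RIntC f a b + RIntC f b 1).
  { rewrite <- (RInt_Chasles (V := C_R_CompleteNormedModule) f 0 b 1).
    rewrite <- (RInt_Chasles (V := C_R_CompleteNormedModule) f 0 a b). reflexivity.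
    all: apply exRInt_cont; auto; lra. }
  assert (B1 : (Cmod (RIntC f 0 a) <= (a - 0) * M)%R) by (apply RInt_small; auto; lra).
  assert (B2 : (Cmod (RIntC f b 1) <= (1 - b) * M)%R) by (apply RInt_small; auto; lra).
  assert (B3 : (Cmod (G a - G 0%R) < e/4)%R).
  { apply H0. unfold dR. rewrite Rabs_right; lra. }
  assert (B4 : (Cmod (G b - G 1%R) < e/4)%R).
  { apply H1. unfold dR. rewrite Rabs_left; lra. }
  assert (B5 : ((a - 0) * M <= e/8)%R).
  { apply Rle_trans with (e / (8 * M) * M)%R. apply Rmult_le_compat_r; lra. right; field; lra. }
  assert (B6 : ((1 - b) * M <= e/8)%R).
  { apply Rle_trans with (e / (8 * M) * M)%R. apply Rmult_le_compat_r; lra. right; field; lra. }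
  rewrite Hsplit, Imid.
  replace (RIntC f 0 a + (G b - G a) + RIntC f b 1 - (G 1%R - G 0%R))
    with (RIntC f 0 a + RIntC f b 1 + (G b - G 1%R) - (G a - G 0%R)) by ring.
  eapply Rle_lt_trans. apply Cmod_triangle.
  rewrite Cmod_opp.
  eapply Rle_lt_trans. apply Rplus_le_compat_r. eapply Rle_trans. apply Cmod_triangle.
  apply Rplus_le_compat_r. apply Cmod_triangle.
  lra.
Qed.

Lemma is_deriveC_val (f : C -> C) z l l' : is_derive (K := C_AbsRing) f z l -> l = l' ->
  is_derive (K := C_AbsRing) f z l'.
Proof. intros H E; subst; auto. Qed.

Lemma is_deriveR_val (f : R -> C) t l l' : is_derive (K := R_AbsRing) f t l -> l = l' ->
  is_derive (K := R_AbsRing) f t l'.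
Proof. intros H E; subst; auto. Qed.

Definition slopeC (f : C -> C) (z : C) (h : C -> C) : Prop :=
  (exists del, (0 < del)%R /\ forall y, (Cmod (y - z) < del)%R -> f y = f z + (y - z) * h y)
  /\ cc dC h z.

Lemma slopeC_derive f z h : slopeC f z h -> is_derive (K := C_AbsRing) f z (h z).
Proof. intros [[d [Hd H]] Hc]. eapply carathC; eauto. Qed.

Lemma slopeC_cc f z h : slopeC f z h -> cc dC f z.
Proof.
  intros [[d [Hd H]] Hc] e He.
  destruct (Hc 1%R ltac:(lra)) as [d1 [Hd1 H1]].
  set (M := (Cmod (h z) + 1)%R).
  assert (HM : (0 < M)%R) by (unfold M; pose proof (Cmod_ge_0 (h z)); lra).
  exists (Rmin (Rmin d d1) (e / M)). split.
  { apply Rmin_pos. apply Rmin_pos; auto. apply Rdiv_lt_0_compat; auto. }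
  intros s Hs. unfold dC in Hs.
  assert (Hs1 : (Cmod (s - z) < d)%R) by (eapply Rlt_le_trans; [apply Hs|]; eapply Rle_trans; [apply Rmin_l|apply Rmin_l]).
  assert (Hs2 : (Cmod (s - z) < d1)%R) by (eapply Rlt_le_trans; [apply Hs|]; eapply Rle_trans; [apply Rmin_l|apply Rmin_r]).
  assert (Hs3 : (Cmod (s - z) < e / M)%R) by (eapply Rlt_le_trans; [apply Hs|apply Rmin_r]).
  rewrite (H s Hs1). replace (f z + (s - z) * h s - f z) with ((s - z) * h s) by ring.
  rewrite Cmod_mult.
  assert (Hh : (Cmod (h s) <= M)%R).
  { pose proof (Cmod_le_add (h s) (h z)). specialize (H1 s Hs2). unfold M. lra. }
  apply Rle_lt_trans with (Cmod (s - z) * M)%R.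
  apply Rmult_le_compat_l; auto. apply Cmod_ge_0.
  apply Rlt_le_trans with (e / M * M)%R. apply Rmult_lt_compat_r; auto.
  right. field. lra.
Qed.

Lemma derive_ccC (f : C -> C) z l : is_derive (K := C_AbsRing) f z l -> cc dC f z.
Proof.
  intros H. destruct (slopeC_of_derive f z l H) as [h [_ [H2 H3]]].
  apply (slopeC_cc f z h). split; auto. exists 1%R; split; [lra|]; auto.
Qed.

Lemma slopeC_mult f g z h k : slopeC f z h -> slopeC g z k ->
  slopeC (fun s => f s * g s) z (fun s => h s * g s + f z * k s).
Proof.
  intros Hf Hg. pose proof (slopeC_cc _ _ _ Hg) as Gc.
  destruct Hf as [[d1 [Hd1 H1]] C1]. destruct Hg as [[d2 [Hd2 H2]] C2].
  split.
  - exists (Rmin d1 d2). split. apply Rmin_pos; auto. intros s Hs.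
    assert (E1 := H1 s ltac:(eapply Rlt_le_trans; [apply Hs|apply Rmin_l])).
    assert (E2 := H2 s ltac:(eapply Rlt_le_trans; [apply Hs|apply Rmin_r])).
    assert (F1 : f s - f z = (s - z) * h s) by (rewrite E1; ring).
    assert (F2 : g s - g z = (s - z) * k s) by (rewrite E2; ring).
    replace (f s * g s) with (f z * g z + (f s - f z) * g s + f z * (g s - g z)) by ring.
    rewrite F1, F2. ring.
  - apply cc_plus. apply cc_mult; auto. apply cc_mult; auto. apply cc_const.
Qed.

Lemma slopeC_const c z : slopeC (fun _ => c) z (fun _ => 0).
Proof. split. exists 1%R. split; [lra|]. intros; ring. apply cc_const. Qed.

Lemma slopeC_lin c z : slopeC (fun y => y - c) z (fun _ => 1).
Proof. split. exists 1%R. split; [lra|]. intros; ring. apply cc_const. Qed.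

Lemma slopeC_id z : slopeC (fun y => y) z (fun _ => 1).
Proof. split. exists 1%R. split; [lra|]. intros; ring. apply cc_const. Qed.

Lemma slopeC_inv f z h : slopeC f z h -> f z <> 0 ->
  slopeC (fun s => / f s) z (fun s => - h s * / (f s * f z)).
Proof.
  intros Hf Hn. pose proof (slopeC_cc _ _ _ Hf) as Fc.
  destruct (cc_nonzero_near _ _ _ Fc Hn) as [d0 [Hd0 N0]].
  destruct Hf as [[d1 [Hd1 H1]] C1].
  split.
  - exists (Rmin d0 d1). split. apply Rmin_pos; auto. intros s Hs.
    assert (Fs : f s <> 0) by (apply N0; eapply Rlt_le_trans; [apply Hs|apply Rmin_l]).
    assert (E := H1 s ltac:(eapply Rlt_le_trans; [apply Hs|apply Rmin_r])).
    assert (E' : (s - z) * h s = f s - f z) by (rewrite E; ring).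
    replace (/ f z + (s - z) * (- h s * / (f s * f z))) with (/ f z - ((s - z) * h s) / (f s * f z)) by (field; auto).
    rewrite E'. field. auto.
  - apply cc_mult. apply cc_opp; auto. apply cc_inv. apply cc_mult; auto. apply cc_const.
    apply Cmult_neq_0; auto.
Qed.

Lemma cprod_nz lo n (f : nat -> C) : (forall i, (lo <= i < lo + n)%nat -> f i <> 0) ->
  cprod_from lo n f <> 0.
Proof.
  induction n; intros H; simpl.
  - intro E. apply RtoC_inj in E. lra.
  - apply Cmult_neq_0. apply IHn. intros; apply H; lia. apply H; lia.
Qed.

Lemma cprod_slope lo n (u : nat -> C) y :
  (forall i, (lo <= i < lo + n)%nat -> y <> u i) ->
  exists h, h y = cprod_from lo n (fun i => y - u i) * csum_from lo n (fun i => / (y - u i)) /\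
    slopeC (fun y => cprod_from lo n (fun i => y - u i)) y h.
Proof.
  induction n; intros H.
  - exists (fun _ => 0). split. simpl. ring. simpl. apply (slopeC_const 1).
  - destruct IHn as [h [Hh Hs]]. intros; apply H; lia.
    eexists. split; [|apply (slopeC_mult _ _ _ _ _ Hs (slopeC_lin (u (lo + n)%nat) y))].
    simpl. rewrite Hh. field.
    intro E. apply (H (lo + n)%nat). lia. replace y with ((y - u (lo + n)%nat) + u (lo+n)%nat) by ring.
    rewrite E. ring.
Qed.

Definition Lg (g : nat) (u : nat -> C) (y : C) : C :=
  / y + csum_from 2 (2 * g) (fun i => / (y - u i)).

Lemma curve_derive g (u : nat -> C) (y : C) : y <> 0 ->
  (forall i, (2 <= i <= 2 * g + 1)%nat -> y <> u i) ->
  is_derive (K := C_AbsRing) (curve_rhs g u) y (curve_rhs g u y * Lg g u y).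
Proof.
  intros Hy Hu. destruct (cprod_slope 2 (2*g) u y) as [h [Hh Hs]].
  intros; apply Hu; lia.
  assert (Hs2 := slopeC_mult _ _ _ _ _ (slopeC_id y) Hs).
  apply slopeC_derive in Hs2. eapply is_deriveC_val. exact Hs2.
  rewrite Hh. unfold curve_rhs, Lg. match goal with |- ?a = ?b => change (@eq C a b) end. field. auto.
Qed.

Lemma csum_cc {X} (dist : X -> X -> R) lo n (f : nat -> X -> C) x :
  (forall i, (lo <= i < lo + n)%nat -> cc dist (f i) x) ->
  cc dist (fun y => csum_from lo n (fun i => f i y)) x.
Proof.
  induction n; intros H; simpl.
  - apply cc_const.
  - apply cc_plus. apply IHn. intros; apply H; lia. apply H; lia.
Qed.

Lemma Lg_cc g (u : nat -> C) (y : C) : y <> 0 -> (forall i, (2 <= i <= 2 * g + 1)%nat -> y <> u i) ->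
  cc dC (Lg g u) y.
Proof.
  intros Hy Hu. unfold Lg. apply cc_plus.
  apply cc_inv; auto. apply ccC_id.
  apply (csum_cc dC 2 (2*g) (fun i y => / (y - u i))). intros i Hi.
  apply cc_inv. apply cc_minus. apply ccC_id. apply cc_const.
  intro E. apply (Hu i). lia. replace y with ((y - u i) + u i) by ring. rewrite E. ring.
Qed.

Lemma curve_nz g (u : nat -> C) (y : C) : y <> 0 -> (forall i, (2 <= i <= 2 * g + 1)%nat -> y <> u i) ->
  curve_rhs g u y <> 0.
Proof.
  intros Hy Hu. unfold curve_rhs. apply Cmult_neq_0; auto. apply cprod_nz.
  intros i Hi E. apply (Hu i). lia. replace y with ((y - u i) + u i) by ring. rewrite E. ring.
Qed.

Lemma deriveR_cc (f : R -> C) t l : is_derive (K := R_AbsRing) f t l -> cc dR f t.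
Proof. intros H. destruct (derive_slopeR f t l H) as [h [_ Hs]]. eapply slopeR_cc; eauto. Qed.

Lemma exact_loop g U (p dp : R -> C) (w : (nat -> C) -> R -> C) u (Phi Phi' : C -> C) :
  lifted_loop g U p dp w -> U u ->
  (forall t, (0 <= t <= 1)%R -> is_derive (K := C_AbsRing) Phi (p t) (Phi' (p t))) ->
  (forall t, (0 <= t <= 1)%R -> cc dC Phi' (p t)) ->
  RIntC (fun t => (Phi' (p t) - Phi (p t) * Lg g u (p t) / 2) * dp t / w u t) 0 1 = RtoC 0.
Proof.
  intros [Hp01 [Hpd [Hdpc [Hav [Hsq [Hw01 [Hwc Hwu]]]]]]] Hu HPhi HPhi'.
  assert (Wnz : forall t, (0 <= t <= 1)%R -> w u t <> 0).
  { intros t Ht E. destruct (Hav u Hu t Ht) as [H0 Hi].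
    apply (curve_nz g u (p t) H0 Hi). rewrite <- (Hsq u Hu t Ht), E. ring. }
  set (G := fun t => Phi (p t) * / w u t).
  assert (E := ftc01 (fun t => (Phi' (p t) - Phi (p t) * Lg g u (p t) / 2) * dp t / w u t) G).
  rewrite E. unfold G. rewrite (Hp01), (Hw01 u Hu). toC. ring.
  - intros t Ht. apply ccR_cont. destruct (Hav u Hu t Ht) as [H0 Hi].
    unfold Cdiv. apply cc_mult. apply cc_mult.
    + apply cc_minus. apply cc_compC. apply (deriveR_cc _ _ _ (Hpd t Ht)). apply HPhi'; auto.
      apply cc_mult. apply cc_mult. apply cc_compC. apply (deriveR_cc _ _ _ (Hpd t Ht)).
      apply (derive_ccC _ _ _ (HPhi t Ht)).
      apply cc_compC. apply (deriveR_cc _ _ _ (Hpd t Ht)). apply Lg_cc; auto.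
      apply cc_const.
    + apply cont_ccR. apply Hdpc; auto.
    + apply cc_inv. apply cont_ccR. apply Hwc; auto. apply Wnz; auto.
  - intros t Ht. unfold G. apply cc_mult. apply cc_compC. apply (deriveR_cc _ _ _ (Hpd t Ht)).
    apply (derive_ccC _ _ _ (HPhi t Ht)).
    apply cc_inv. apply cont_ccR. apply Hwc; auto. apply Wnz; auto.
  - intros t Ht. assert (Ht' : (0 <= t <= 1)%R) by lra.
    destruct (Hav u Hu t Ht') as [H0 Hi].
    destruct (derive_slopeR p t (dp t) (Hpd t Ht')) as [hx [Ehx Sx]].
    destruct (slopeR_compC p t hx Phi (Phi' (p t)) Sx (HPhi t Ht')) as [hPh [EhPh SPh]].
    destruct (slopeR_compC p t hx (curve_rhs g u) _ Sx (curve_derive g u (p t) H0 Hi)) as [hQ [EhQ SQ]].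
    assert (SW := slopeR_sq (w u) (fun s => curve_rhs g u (p s)) t hQ
                    (cont_ccR _ _ (Hwc u Hu t Ht')) (Wnz t Ht') SQ).
    assert (SW' : slopeR (w u) t (fun s => hQ s / (w u s + w u t))).
    { apply SW. exists (Rmin t (1 - t)). split. apply Rmin_pos; lra.
      intros s Hs. apply Hsq; auto.
      assert (Rabs (s - t) < t /\ Rabs (s - t) < 1 - t)%R.
      { split; eapply Rlt_le_trans; try apply Hs. apply Rmin_l. apply Rmin_r. }
      destruct H as [A1 A2]. apply Rabs_lt_between in A1. apply Rabs_lt_between in A2. lra. }
    assert (SI := slopeR_inv _ _ _ SW' (Wnz t Ht')).
    assert (SG := slopeR_mult _ _ _ _ _ SPh SI).
    apply slopeR_derive in SG. eapply is_deriveR_val. exact SG.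
    cbv beta. rewrite EhPh, EhQ, Ehx.
    assert (Wt := Wnz t Ht').
    rewrite <- (Hsq u Hu t Ht'). toC. field. split; auto. replace (w u t + w u t) with (2 * w u t) by ring. apply Cmult_neq_0; auto. intro Z. apply RtoC_inj in Z. lra.
Qed.

Notation exC f := (ex_RInt (V := C_R_CompleteNormedModule) f 0 1).

Lemma RIntC_plus (f g : R -> C) : exC f -> exC g ->
  RIntC (fun t => f t + g t) 0 1 = RIntC f 0 1 + RIntC g 0 1.
Proof. intros Hf Hg. exact (RInt_plus (V := C_R_CompleteNormedModule) f g 0 1 Hf Hg). Qed.

Lemma exC_plus (f g : R -> C) : exC f -> exC g -> exC (fun t => f t + g t).
Proof. intros Hf Hg. exact (ex_RInt_plus (V := C_R_CompleteNormedModule) f g 0 1 Hf Hg). Qed.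

Lemma RIntC_minus (f g : R -> C) : exC f -> exC g ->
  RIntC (fun t => f t - g t) 0 1 = RIntC f 0 1 - RIntC g 0 1.
Proof. intros Hf Hg. exact (RInt_minus (V := C_R_CompleteNormedModule) f g 0 1 Hf Hg). Qed.

Lemma exC_minus (f g : R -> C) : exC f -> exC g -> exC (fun t => f t - g t).
Proof. intros Hf Hg. exact (ex_RInt_minus (V := C_R_CompleteNormedModule) f g 0 1 Hf Hg). Qed.

Lemma is_RIntC_cmult (f : R -> C) (c l : C) :
  is_RInt (V := C_R_CompleteNormedModule) f 0 1 l ->
  is_RInt (V := C_R_CompleteNormedModule) (fun t => c * f t) 0 1 (c * l).
Proof.
  intros H.
  assert (H1 := is_RInt_fct_extend_fst (U := R_NormedModule) (V := R_NormedModule) f 0 1 l H).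
  assert (H2 := is_RInt_fct_extend_snd (U := R_NormedModule) (V := R_NormedModule) f 0 1 l H).
  destruct c as [c1 c2]. destruct l as [l1 l2].
  unfold Cmult at 2. simpl fst; simpl snd. simpl in H1, H2.
  assert (A1 := is_RInt_scal (V := R_NormedModule) _ 0 1 c1 l1 H1).
  assert (A2 := is_RInt_scal (V := R_NormedModule) _ 0 1 c2 l2 H2).
  assert (A3 := is_RInt_scal (V := R_NormedModule) _ 0 1 c1 l2 H2).
  assert (A4 := is_RInt_scal (V := R_NormedModule) _ 0 1 c2 l1 H1).
  assert (B1 := is_RInt_minus (V := R_NormedModule) _ _ 0 1 _ _ A1 A2).
  assert (B2 := is_RInt_plus (V := R_NormedModule) _ _ 0 1 _ _ A3 A4).
  apply (is_RInt_fct_extend_pair (U := R_NormedModule) (V := R_NormedModule)).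
  - eapply is_RInt_ext. 2: exact B1.
    intros x _. simpl. unfold minus, plus, opp, scal; simpl. unfold mult; simpl. destruct (f x). simpl. ring.
  - eapply is_RInt_ext. 2: exact B2.
    intros x _. simpl. unfold minus, plus, opp, scal; simpl. unfold mult; simpl. destruct (f x). simpl. ring.
Qed.

Lemma RIntC_cmult (f : R -> C) (c : C) : exC f ->
  RIntC (fun t => c * f t) 0 1 = c * RIntC f 0 1.
Proof.
  intros H. apply is_RInt_unique. apply is_RIntC_cmult. exact (RInt_correct _ _ _ H).
Qed.

Lemma exC_cmult (f : R -> C) (c : C) : exC f -> exC (fun t => c * f t).
Proof.
  intros H. eexists. apply is_RIntC_cmult. exact (RInt_correct _ _ _ H).
Qed.

Lemma RIntC_ext (f g : R -> C) : (forall t, (0 <= t <= 1)%R -> f t = g t) ->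
  RIntC f 0 1 = RIntC g 0 1.
Proof.
  intros H. apply RInt_ext. intros x Hx. rewrite Rmin_left in Hx by lra.
  rewrite Rmax_right in Hx by lra. apply H. lra.
Qed.

Lemma exC_ext (f g : R -> C) : (forall t, (0 <= t <= 1)%R -> f t = g t) -> exC f -> exC g.
Proof.
  intros H Hf. eapply ex_RInt_ext. 2: exact Hf. intros x Hx. rewrite Rmin_left in Hx by lra.
  rewrite Rmax_right in Hx by lra. apply H. lra.
Qed.

Lemma exC_zero : exC (fun _ => RtoC 0).
Proof. apply exRInt_cont; try lra. intros. apply ccR_cont. apply cc_const. Qed.

Lemma RIntC_zero : RIntC (fun _ => RtoC 0) 0 1 = RtoC 0.
Proof.
  rewrite (RIntC_ext _ (fun t => RtoC 0 * RtoC 0)) by (intros; ring).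
  rewrite RIntC_cmult by apply exC_zero. toC. ring.
Qed.

Lemma exC_csum lo n (f : nat -> R -> C) : (forall i, (lo <= i < lo + n)%nat -> exC (f i)) ->
  exC (fun t => csum_from lo n (fun i => f i t)).
Proof.
  induction n; intros H; simpl.
  - apply exC_zero.
  - apply exC_plus. apply IHn; intros; apply H; lia. apply H; lia.
Qed.

Lemma RIntC_csum lo n (f : nat -> R -> C) : (forall i, (lo <= i < lo + n)%nat -> exC (f i)) ->
  RIntC (fun t => csum_from lo n (fun i => f i t)) 0 1 = csum_from lo n (fun i => RIntC (f i) 0 1).
Proof.
  induction n; intros H; simpl.
  - toC. apply RIntC_zero.
  - rewrite RIntC_plus. rewrite IHn. reflexivity.
    intros; apply H; lia. apply exC_csum; intros; apply H; lia. apply H; lia.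
Qed.

Lemma csum_ext lo n (f g : nat -> C) : (forall i, (lo <= i < lo + n)%nat -> f i = g i) ->
  csum_from lo n f = csum_from lo n g.
Proof. induction n; intros H; simpl; auto. rewrite IHn, H; try lia; auto. intros; apply H; lia. Qed.

Lemma csum_plus lo n (f g : nat -> C) :
  csum_from lo n (fun i => f i + g i) = csum_from lo n f + csum_from lo n g.
Proof. induction n; simpl. ring. rewrite IHn. ring. Qed.

Lemma csum_scal lo n (c : C) (f : nat -> C) :
  csum_from lo n (fun i => c * f i) = c * csum_from lo n f.
Proof. induction n; simpl. ring. rewrite IHn. ring. Qed.

Lemma csum_opp lo n (f : nat -> C) :
  csum_from lo n (fun i => - f i) = - csum_from lo n f.
Proof. induction n; simpl. ring. rewrite IHn. ring. Qed.

Lemma csum_const lo n (c : C) : csum_from lo n (fun _ => c) = INR n * c.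
Proof. induction n. simpl. ring. change (csum_from lo n (fun _ => c) + c = INR (S n) * c). rewrite IHn, S_INR, RtoC_plus. ring. Qed.

Lemma csum_shift1 n (f : nat -> C) : csum_from 1 (S n) f = f 1%nat + csum_from 2 n f.
Proof. induction n; simpl. ring. simpl in IHn. rewrite IHn.
  replace (1 + S n)%nat with (2 + n)%nat by lia. ring. Qed.

Lemma csum_skip lo n k (f : nat -> C) : (lo <= k < lo + n)%nat ->
  csum_from lo n (fun i => if Nat.eqb i k then 0 else f i) = csum_from lo n f - f k.
Proof.
  induction n; intros H; simpl. lia.
  destruct (Nat.eq_dec k (lo + n)%nat) as [E|E].
  - subst. rewrite Nat.eqb_refl.
    rewrite (csum_ext lo n _ f). ring.
    intros i Hi. destruct (Nat.eqb_spec i (lo + n)); [lia|auto].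
  - rewrite IHn by lia. destruct (Nat.eqb_spec (lo + n) k); [lia|]. ring.
Qed.

Definition padm (m : nat) (p : nat -> R -> C) (phi : C -> C) : Prop :=
  forall l, (l < m)%nat -> forall t, (0 <= t <= 1)%R -> cc dC phi (p l t).

Lemma loop_Wnz g U x d W u : lifted_loop g U x d W -> U u ->
  forall t, (0 <= t <= 1)%R -> W u t <> 0.
Proof.
  intros [Hp01 [Hpd [Hdpc [Hav [Hsq [Hw01 [Hwc Hwu]]]]]]] Hu t Ht E.
  destruct (Hav u Hu t Ht) as [H0 Hi].
  apply (curve_nz g u (x t) H0 Hi). rewrite <- (Hsq u Hu t Ht), E. toC. ring.
Qed.

Lemma loop_integrand_cc g U x d W u phi : lifted_loop g U x d W -> U u ->
  forall t, (0 <= t <= 1)%R -> cc dC phi (x t) -> cc dR (fun t => phi (x t) * d t / W u t) t.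
Proof.
  intros HL Hu t Ht Hphi. pose proof (loop_Wnz _ _ _ _ _ _ HL Hu t Ht) as Wn.
  destruct HL as [Hp01 [Hpd [Hdpc [Hav [Hsq [Hw01 [Hwc Hwu]]]]]]].
  unfold Cdiv. apply cc_mult. apply cc_mult.
  apply cc_compC; auto. apply (deriveR_cc _ _ _ (Hpd t Ht)).
  apply cont_ccR; auto. apply cc_inv; auto. apply cont_ccR; auto.
Qed.

Lemma loop_exC g U x d W u phi : lifted_loop g U x d W -> U u ->
  (forall t, (0 <= t <= 1)%R -> cc dC phi (x t)) -> exC (fun t => phi (x t) * d t / W u t).
Proof.
  intros HL Hu Hphi. apply exRInt_cont; try lra. intros t Ht. apply ccR_cont.
  eapply loop_integrand_cc; eauto.
Qed.

Section Per.
Variables (g m : nat) (U : (nat -> C) -> Prop) (c : nat -> C) (p dp : nat -> R -> C)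
  (w : nat -> (nat -> C) -> R -> C).
Hypothesis HL : forall k, (k < m)%nat -> lifted_loop g U (p k) (dp k) (w k).

Lemma period_lin u (a b : C) phi1 phi2 : U u -> padm m p phi1 -> padm m p phi2 ->
  period m c p dp w u (fun y => a * phi1 y + b * phi2 y) =
  a * period m c p dp w u phi1 + b * period m c p dp w u phi2.
Proof.
  intros Hu H1 H2. unfold period.
  rewrite <- !csum_scal, <- csum_plus. apply csum_ext. intros l Hl.
  assert (E1 := loop_exC _ _ _ _ _ u phi1 (HL l ltac:(lia)) Hu (H1 l ltac:(lia))).
  assert (E2 := loop_exC _ _ _ _ _ u phi2 (HL l ltac:(lia)) Hu (H2 l ltac:(lia))).
  rewrite (RIntC_ext _ (fun t => a * (phi1 (p l t) * dp l t / w l u t) + b * (phi2 (p l t) * dp l t / w l u t))).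
  rewrite RIntC_plus, !RIntC_cmult; auto. toC. ring.
  apply exC_cmult; auto. apply exC_cmult; auto.
  intros t Ht. pose proof (loop_Wnz _ _ _ _ _ _ (HL l ltac:(lia)) Hu t Ht). toC. field. auto.
Qed.

Lemma padm_lin (a b : C) phi1 phi2 : padm m p phi1 -> padm m p phi2 ->
  padm m p (fun y => a * phi1 y + b * phi2 y).
Proof.
  intros H1 H2 l Hl t Ht. apply cc_plus; apply cc_mult; try apply cc_const; auto.
Qed.

Lemma padm_csum lo n (phi : nat -> C -> C) : (forall i, (lo <= i < lo + n)%nat -> padm m p (phi i)) ->
  padm m p (fun y => csum_from lo n (fun i => phi i y)).
Proof.
  intros H l Hl t Ht. apply (csum_cc dC lo n (fun i y => phi i y)). intros i Hi. apply H; auto.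
Qed.

Lemma period_ext u phi1 phi2 : (forall l, (l < m)%nat -> forall t, (0 <= t <= 1)%R -> phi1 (p l t) = phi2 (p l t)) ->
  period m c p dp w u phi1 = period m c p dp w u phi2.
Proof.
  intros H. unfold period. apply csum_ext. intros l Hl. f_equal. apply RIntC_ext.
  intros t Ht. rewrite H; auto. lia.
Qed.

Lemma period_csum u lo n (phi : nat -> C -> C) : U u ->
  (forall i, (lo <= i < lo + n)%nat -> padm m p (phi i)) ->
  period m c p dp w u (fun y => csum_from lo n (fun i => phi i y)) =
  csum_from lo n (fun i => period m c p dp w u (phi i)).
Proof.
  intros Hu. induction n; intros H; simpl.
  - rewrite (period_ext u _ (fun y => 0 * (fun _ => RtoC 0) y + 0 * (fun _ => RtoC 0) y)).
    rewrite period_lin; auto. toC. ring.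
    intros l Hl t Ht. apply cc_const. intros l Hl t Ht. apply cc_const.
    intros. simpl. ring.
  - rewrite (period_ext u _ (fun y => 1 * (fun y => csum_from lo n (fun i => phi i y)) y + 1 * phi (lo + n)%nat y)).
    rewrite period_lin; auto. rewrite IHn. toC. ring.
    intros; apply H; lia. apply padm_csum. intros; apply H; lia. apply H; lia.
    intros. simpl. ring.
Qed.

Lemma period_exact u (Phi Phi' : C -> C) : U u ->
  (forall l, (l < m)%nat -> forall t, (0 <= t <= 1)%R ->
     is_derive (K := C_AbsRing) Phi (p l t) (Phi' (p l t)) /\ cc dC Phi' (p l t)) ->
  period m c p dp w u (fun y => Phi' y - Phi y * Lg g u y / 2) = 0.
Proof.
  intros Hu H. unfold period. rewrite (csum_ext _ _ _ (fun _ => 0 * 0)). rewrite csum_scal. ring.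
  intros l Hl. rewrite exact_loop with (U := U) (Phi := Phi) (Phi' := Phi'); auto.
  ring. apply HL; lia. intros; apply H; auto; lia. intros; apply H; auto; lia.
Qed.
End Per.

Lemma upd_same (u : nat -> C) k : upd u k (u k) = u.
Proof. apply functional_extensionality. intros i. unfold upd. destruct (Nat.eqb_spec i k); subst; auto. Qed.

Lemma upd_k (u : nat -> C) k z : upd u k z k = z.
Proof. unfold upd. rewrite Nat.eqb_refl. auto. Qed.

Lemma upd_other (u : nat -> C) k z i : i <> k -> upd u k z i = u i.
Proof. intros H. unfold upd. destruct (Nat.eqb_spec i k); [lia|auto]. Qed.

Lemma upd_polydisc g u0 r (u : nat -> C) k z : polydisc g u0 r u -> (Cmod (z - u0 k) < r)%R ->
  polydisc g u0 r (upd u k z).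
Proof.
  intros H Hz i Hi. unfold upd. destruct (Nat.eqb_spec i k); subst; auto.
Qed.

Lemma cprod_upd_out lo n (u : nat -> C) k z y : ~ (lo <= k < lo + n)%nat ->
  cprod_from lo n (fun i => y - upd u k z i) = cprod_from lo n (fun i => y - u i).
Proof.
  induction n; intros H; simpl; auto. rewrite IHn by lia. rewrite upd_other by lia. auto.
Qed.

Lemma cprod_upd_in lo n (u : nat -> C) k z y : (lo <= k < lo + n)%nat ->
  cprod_from lo n (fun i => y - upd u k z i) * (y - u k) = cprod_from lo n (fun i => y - u i) * (y - z).
Proof.
  induction n; intros H; simpl. lia.
  destruct (Nat.eq_dec k (lo + n)%nat) as [E|E].
  - subst. rewrite cprod_upd_out by lia. rewrite upd_k. ring.
  - rewrite upd_other by lia.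
    replace (cprod_from lo n (fun i => y - upd u k z i) * (y - u (lo + n)%nat) * (y - u k))
      with ((cprod_from lo n (fun i => y - upd u k z i) * (y - u k)) * (y - u (lo + n)%nat)) by ring.
    rewrite IHn by lia. ring.
Qed.

Lemma curve_upd g (u : nat -> C) k z y : (2 <= k <= 2 * g + 1)%nat ->
  curve_rhs g (upd u k z) y * (y - u k) = curve_rhs g u y * (y - z).
Proof.
  intros Hk. unfold curve_rhs.
  replace (y * cprod_from 2 (2 * g) (fun i => y - upd u k z i) * (y - u k))
    with (y * (cprod_from 2 (2 * g) (fun i => y - upd u k z i) * (y - u k))) by ring.
  rewrite cprod_upd_in by lia. ring.
Qed.

Lemma cc_continuity_pt (f : R -> C) t : cc dR f t -> continuity_pt (fun s => Cmod (f s)) t.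
Proof.
  intros H eps Heps. destruct (H eps Heps) as [d [Hd H1]]. exists d. split; auto.
  intros s [_ Hs]. simpl in Hs. unfold R_dist in *. specialize (H1 s Hs).
  simpl. unfold R_dist. pose proof (norm_triangle_inv (V := C_NormedModule) (f s) (f t)).
  change (Rabs (Cmod (f s) - Cmod (f t)) <= Cmod (f s - f t))%R in H0. lra.
Qed.

Lemma cc_max (f : R -> C) : (forall t, (0 <= t <= 1)%R -> cc dR f t) ->
  exists M, (0 < M)%R /\ forall t, (0 <= t <= 1)%R -> (Cmod (f t) <= M)%R.
Proof.
  intros H. destruct (continuity_ab_maj (fun s => Cmod (f s)) 0 1) as [Mx [HM HMx]]. lra.
  intros c Hc. apply cc_continuity_pt. auto.
  exists (Cmod (f Mx) + 1)%R. split. pose proof (Cmod_ge_0 (f Mx)); lra.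
  intros t Ht. specialize (HM t Ht). simpl in HM. lra.
Qed.

Lemma cc_min (f : R -> C) : (forall t, (0 <= t <= 1)%R -> cc dR f t) ->
  (forall t, (0 <= t <= 1)%R -> f t <> 0) ->
  exists m, (0 < m)%R /\ forall t, (0 <= t <= 1)%R -> (m <= Cmod (f t))%R.
Proof.
  intros H Hn. destruct (continuity_ab_min (fun s => Cmod (f s)) 0 1) as [mx [Hm Hmx]]. lra.
  intros c Hc. apply cc_continuity_pt. auto.
  exists (Cmod (f mx)). split. apply Cmod_gt_0. auto.
  intros t Ht. specialize (Hm t Ht). simpl in Hm. lra.
Qed.

Lemma re_nz (q h : C) : q * q = 1 - h -> (Cmod h < 1)%R -> Re q <> 0%R.
Proof.
  intros E Hh Z. destruct q as [a b]. simpl in Z. subst a.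
  assert (Re (1 - h) = (- (b * b))%R).
  { rewrite <- E. simpl. ring. }
  pose proof (re_le_Cmod h). apply Rabs_le_between in H0.
  assert (Re (1 - h) = (1 - Re h)%R) by (destruct h; simpl; ring).
  nra.
Qed.

Lemma sqrt_close (q h : C) : q * q = 1 - h -> (0 < Re q)%R -> (Cmod (q - 1) <= Cmod h)%R.
Proof.
  intros E Hq.
  assert (E2 : (q - 1) * (q + 1) = - h).
  { replace (- h) with (- 1 + (1 - h)) by ring. rewrite <- E. ring. }
  assert (H1 : (1 <= Cmod (q + 1))%R).
  { pose proof (re_le_Cmod (q + 1)). assert (Re (q + 1) = (Re q + 1)%R) by (destruct q; simpl; ring).
    rewrite H0 in H. apply Rabs_le_between in H. lra. }
  assert (Cmod (q - 1) * Cmod (q + 1) = Cmod h)%R by (rewrite <- Cmod_mult, E2, Cmod_opp; auto).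
  pose proof (Cmod_ge_0 (q - 1)). nra.
Qed.

Definition UC (z0 : C) (F : C -> R -> C) (F0 : R -> C) : Prop :=
  forall eps, (0 < eps)%R -> exists eta, (0 < eta)%R /\ forall z, (Cmod (z - z0) < eta)%R ->
    forall t, (0 <= t <= 1)%R -> (Cmod (F z t - F0 t) < eps)%R.
Definition bnd (F0 : R -> C) : Prop :=
  exists M, (0 <= M)%R /\ forall t, (0 <= t <= 1)%R -> (Cmod (F0 t) <= M)%R.
Definition lbd (F0 : R -> C) : Prop :=
  exists m, (0 < m)%R /\ forall t, (0 <= t <= 1)%R -> (m <= Cmod (F0 t))%R.

Section UCs.
Variable z0 : C.

Lemma UC_const F0 : UC z0 (fun _ => F0) F0.
Proof. intros e He. exists 1%R. split; [lra|]. intros. replace (F0 t - F0 t) with (RtoC 0) by ring.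
  rewrite Cmod_0. lra. Qed.

Lemma UC_plus F G F0 G0 : UC z0 F F0 -> UC z0 G G0 -> UC z0 (fun z t => F z t + G z t) (fun t => F0 t + G0 t).
Proof.
  intros Hf Hg e He.
  destruct (Hf (e/2)%R ltac:(lra)) as [d1 [Hd1 H1]].
  destruct (Hg (e/2)%R ltac:(lra)) as [d2 [Hd2 H2]].
  exists (Rmin d1 d2). split. apply Rmin_pos; auto.
  intros y Hy t Ht. specialize (H1 y (Rlt_le_trans _ _ _ Hy (Rmin_l _ _)) t Ht).
  specialize (H2 y (Rlt_le_trans _ _ _ Hy (Rmin_r _ _)) t Ht).
  replace (F y t + G y t - (F0 t + G0 t)) with ((F y t - F0 t) + (G y t - G0 t)) by ring.
  eapply Rle_lt_trans. apply Cmod_triangle. lra.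
Qed.

Lemma UC_mult F G F0 G0 : UC z0 F F0 -> UC z0 G G0 -> bnd F0 -> bnd G0 ->
  UC z0 (fun z t => F z t * G z t) (fun t => F0 t * G0 t).
Proof.
  intros Hf Hg [A [HA BA]] [B [HB BB]] e He.
  destruct (Hf (Rmin 1 (e / (2 * (B + 1))))%R) as [d1 [Hd1 H1]].
  { apply Rmin_pos; [lra|]. apply Rdiv_lt_0_compat; lra. }
  destruct (Hg (e / (2 * (A + 1 + 1)))%R) as [d2 [Hd2 H2]].
  { apply Rdiv_lt_0_compat; lra. }
  exists (Rmin d1 d2). split. apply Rmin_pos; auto.
  intros y Hy t Ht. specialize (H1 y (Rlt_le_trans _ _ _ Hy (Rmin_l _ _)) t Ht).
  specialize (H2 y (Rlt_le_trans _ _ _ Hy (Rmin_r _ _)) t Ht).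
  specialize (BA t Ht). specialize (BB t Ht).
  replace (F y t * G y t - F0 t * G0 t) with (F y t * (G y t - G0 t) + (F y t - F0 t) * G0 t) by ring.
  eapply Rle_lt_trans. apply Cmod_triangle. rewrite !Cmod_mult.
  assert (Hfy : (Cmod (F y t) <= A + 1)%R).
  { pose proof (Cmod_le_add (F y t) (F0 t)). pose proof (Rmin_l 1 (e / (2 * (B + 1)))). lra. }
  assert (Hm : (Cmod (F y t - F0 t) < e / (2 * (B + 1)))%R).
  { eapply Rlt_le_trans. apply H1. apply Rmin_r. }
  assert (P1 : (Cmod (F y t) * Cmod (G y t - G0 t) < e/2)%R).
  { apply Rle_lt_trans with ((A+1+1) * Cmod (G y t - G0 t))%R.
    apply Rmult_le_compat_r; [apply Cmod_ge_0|lra].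
    apply Rlt_le_trans with ((A+1+1) * (e / (2 * (A + 1 + 1))))%R.
    apply Rmult_lt_compat_l; lra. right; field; lra. }
  assert (P2 : (Cmod (F y t - F0 t) * Cmod (G0 t) <= e/2)%R).
  { apply Rle_trans with ((e / (2 * (B + 1))) * (B+1))%R.
    apply Rmult_le_compat; try apply Cmod_ge_0; lra. right; field; lra. }
  lra.
Qed.

Lemma UC_inv F F0 : UC z0 F F0 -> lbd F0 -> UC z0 (fun z t => / F z t) (fun t => / F0 t).
Proof.
  intros Hf [A [HA BA]] e He.
  destruct (Hf (Rmin (A/2) (e * A * A / 2))%R) as [d [Hd H1]].
  { apply Rmin_pos; [lra|]. apply Rdiv_lt_0_compat; [|lra]. apply Rmult_lt_0_compat; nra. }
  exists d. split; auto. intros y Hy t Ht. specialize (H1 y Hy t Ht). specialize (BA t Ht).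
  assert (Hy1 : (Cmod (F y t - F0 t) < A/2)%R) by (eapply Rlt_le_trans; [apply H1|apply Rmin_l]).
  assert (Hy2 : (Cmod (F y t - F0 t) < e*A*A/2)%R) by (eapply Rlt_le_trans; [apply H1|apply Rmin_r]).
  assert (Hfy : (A/2 < Cmod (F y t))%R).
  { pose proof (Cmod_le_add (F0 t) (F y t)). rewrite Cmod_sym in H. lra. }
  assert (Hfy0 : F y t <> 0). { intro Z. rewrite Z, Cmod_0 in Hfy. lra. }
  assert (Hf0 : F0 t <> 0). { intro Z. rewrite Z, Cmod_0 in BA. lra. }
  replace (/ F y t - / F0 t) with ((F0 t - F y t) / (F y t * F0 t)) by (field; auto).
  rewrite Cmod_div by (apply Cmult_neq_0; auto). rewrite Cmod_mult, Cmod_sym.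
  apply Rlt_le_trans with ((e*A*A/2) / (Cmod (F y t) * Cmod (F0 t)))%R.
  { unfold Rdiv. apply Rmult_lt_compat_r; auto. apply Rinv_0_lt_compat. nra. }
  apply Rle_trans with ((e*A*A/2) / (A/2 * A))%R.
  { unfold Rdiv. apply Rmult_le_compat_l. nra. apply Rinv_le_contravar; nra. }
  right. field. lra.
Qed.

Lemma UC_RInt F F0 : UC z0 F F0 -> (forall t, (0 <= t <= 1)%R -> F z0 t = F0 t) ->
  (exists rho, (0 < rho)%R /\ forall z, (Cmod (z - z0) < rho)%R -> exC (F z)) ->
  cc dC (fun z => RIntC (F z) 0 1) z0.
Proof.
  intros HU HF0 [rho [Hrho Hex]] e He.
  destruct (HU (e/2)%R ltac:(lra)) as [d [Hd H1]].
  exists (Rmin d rho). split. apply Rmin_pos; auto. intros z Hz. unfold dC in Hz.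
  assert (Ez : exC (F z)) by (apply Hex; eapply Rlt_le_trans; [apply Hz|apply Rmin_r]).
  assert (E0 : exC (F z0)) by (apply Hex; replace (z0 - z0) with (RtoC 0) by ring; rewrite Cmod_0; auto).
  rewrite <- RIntC_minus by auto. rewrite <- normCR.
  apply Rle_lt_trans with ((1 - 0) * (e/2))%R; [|lra].
  apply (norm_RInt_le_const (V := C_R_CompleteNormedModule) (fun t => F z t - F z0 t) 0 1). lra.
  intros t Ht. rewrite normCR, HF0 by auto. left. apply H1; auto. eapply Rlt_le_trans; [apply Hz|apply Rmin_l].
  apply RInt_correct. apply exC_minus; auto.
Qed.
End UCs.

Lemma bnd_cc F0 : (forall t, (0 <= t <= 1)%R -> cc dR F0 t) -> bnd F0.
Proof. intros H. destruct (cc_max F0 H) as [M [HM H1]]. exists M. split; auto; lra. Qed.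

Lemma bnd_mult F G : bnd F -> bnd G -> bnd (fun t => F t * G t).
Proof.
  intros [A [HA BA]] [B [HB BB]]. exists (A * B)%R. split. nra.
  intros t Ht. rewrite Cmod_mult. apply Rmult_le_compat; try apply Cmod_ge_0; auto.
Qed.

Lemma bnd_inv F : lbd F -> bnd (fun t => / F t).
Proof.
  intros [m [Hm Bm]]. exists (/ m)%R. split. left; apply Rinv_0_lt_compat; auto.
  intros t Ht. specialize (Bm t Ht). assert (F t <> 0) by (intro Z; rewrite Z, Cmod_0 in Bm; lra).
  rewrite Cmod_inv by auto. apply Rinv_le_contravar; auto.
Qed.

Lemma lbd_mult F G : lbd F -> lbd G -> lbd (fun t => F t * G t).
Proof.
  intros [A [HA BA]] [B [HB BB]]. exists (A * B)%R. split. nra.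
  intros t Ht. rewrite Cmod_mult. apply Rmult_le_compat; try lra; auto.
Qed.

Lemma lbd_cc F : (forall t, (0 <= t <= 1)%R -> cc dR F t) -> (forall t, (0 <= t <= 1)%R -> F t <> 0) -> lbd F.
Proof. intros H1 H2. destruct (cc_min F H1 H2) as [m [Hm H]]. exists m. auto. Qed.

Definition clamp (s : R) : R := Rmax 0 (Rmin 1 s).
Lemma clamp_range s : (0 <= clamp s <= 1)%R.
Proof. unfold clamp, Rmax, Rmin. repeat destruct Rle_dec; lra. Qed.
Lemma clamp_id s : (0 <= s <= 1)%R -> clamp s = s.
Proof. intros. unfold clamp, Rmax, Rmin. repeat destruct Rle_dec; lra. Qed.
Lemma clamp_lip a b : (Rabs (clamp a - clamp b) <= Rabs (a - b))%R.
Proof. unfold clamp, Rmax, Rmin. repeat destruct Rle_dec; split_Rabs; lra. Qed.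

Lemma contpt_of (phi : R -> R) s :
  (forall eps, (0 < eps)%R -> exists del, (0 < del)%R /\ forall s', (Rabs (s' - s) < del)%R -> (Rabs (phi s' - phi s) < eps)%R) ->
  continuity_pt phi s.
Proof.
  intros H eps He. destruct (H eps He) as [d [Hd H1]]. exists d. split; auto.
  intros y [_ Hy]. simpl in *. unfold R_dist in *. auto.
Qed.

Lemma ivt_pos (phi : R -> R) : (forall s, continuity_pt phi s) -> (0 < phi 0)%R ->
  (forall s, (0 <= s <= 1)%R -> phi s <> 0%R) -> (0 < phi 1)%R.
Proof.
  intros Hc H0 Hn. destruct (Rlt_or_le 0 (phi 1)) as [H|H]; auto. exfalso.
  destruct (IVT_gen phi 0 1 0 Hc) as [s [Hs Es]].
  { rewrite Rmin_right by lra. rewrite Rmax_left by lra. lra. }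
  rewrite Rmin_left in Hs by lra. rewrite Rmax_right in Hs by lra.
  apply (Hn s Hs Es).
Qed.

Lemma Re_minus (a b : C) : Re (a - b) = (Re a - Re b)%R.
Proof. destruct a, b; simpl; ring. Qed.

Section Loop.
Variables (g : nat) (u0 : nat -> C) (r : R) (x d : R -> C) (W : (nat -> C) -> R -> C)
  (u : nat -> C) (k : nat).
Hypothesis HL : lifted_loop g (polydisc g u0 r) x d W.
Hypothesis Hu : polydisc g u0 r u.
Hypothesis Hk : (2 <= k <= 2 * g + 1)%nat.

Let z0 := u k.

Lemma x_cc : forall t, (0 <= t <= 1)%R -> cc dR x t.
Proof. destruct HL as [_ [Hpd _]]. intros t Ht. exact (deriveR_cc _ _ _ (Hpd t Ht)). Qed.

Lemma xz0_nz : forall t, (0 <= t <= 1)%R -> x t - z0 <> 0.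
Proof.
  destruct HL as [_ [_ [_ [Hav _]]]]. intros t Ht E. destruct (Hav u Hu t Ht) as [_ Hi].
  apply (Hi k Hk). replace (x t) with ((x t - z0) + z0) by ring. rewrite E. unfold z0. ring.
Qed.

Lemma W0_nz : forall t, (0 <= t <= 1)%R -> W u t <> 0.
Proof. intros t Ht. exact (loop_Wnz g _ x d W u HL Hu t Ht). Qed.

Lemma q_sq z : polydisc g u0 r (upd u k z) -> forall t, (0 <= t <= 1)%R ->
  (W (upd u k z) t / W u t) * (W (upd u k z) t / W u t) = 1 - (z - z0) / (x t - z0).
Proof.
  intros Hz t Ht. destruct HL as [_ [_ [_ [_ [Hsq _]]]]].
  assert (N1 := xz0_nz t Ht). assert (N2 := W0_nz t Ht).
  assert (E1 := Hsq _ Hz t Ht). assert (E2 := Hsq _ Hu t Ht).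
  assert (E3 := curve_upd g u k z (x t) Hk). fold z0 in E3.
  assert (E4 : curve_rhs g (upd u k z) (x t) = curve_rhs g u (x t) * (x t - z) / (x t - z0)).
  { rewrite <- E3. field. auto. }
  replace (W (upd u k z) t / W u t * (W (upd u k z) t / W u t))
    with ((W (upd u k z) t * W (upd u k z) t) / (W u t * W u t)) by (field; auto).
  rewrite E1, E2, E4. field. split; auto. rewrite <- E2. apply Cmult_neq_0; auto.
Qed.

Lemma z0_in : (Cmod (z0 - u0 k) < r)%R.
Proof. apply Hu. auto. Qed.

Lemma delta0_ex : exists del0, (0 < del0)%R /\ forall t, (0 <= t <= 1)%R -> (del0 <= Cmod (x t - z0))%R.
Proof.
  apply (cc_min (fun t => x t - z0)). intros t Ht. apply cc_minus. apply x_cc; auto. apply cc_const.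
  apply xz0_nz.
Qed.

Lemma disc_in z rad : (rad <= r - Cmod (z0 - u0 k))%R -> (Cmod (z - z0) < rad)%R ->
  polydisc g u0 r (upd u k z).
Proof.
  intros H1 H2. apply upd_polydisc; auto. pose proof (Cmod_tri3 z z0 (u0 k)). lra.
Qed.

Lemma W_sign del0 : (0 < del0)%R -> (forall t, (0 <= t <= 1)%R -> (del0 <= Cmod (x t - z0))%R) ->
  forall z, (Cmod (z - z0) < Rmin (del0/2) (r - Cmod (z0 - u0 k)))%R ->
  forall t, (0 <= t <= 1)%R -> (0 < Re (W (upd u k z) t / W u t))%R.
Proof.
  intros Hd0 Hdel z Hz t Ht.
  set (rad := Rmin (del0/2) (r - Cmod (z0 - u0 k))) in *.
  assert (Hrad1 : (rad <= del0/2)%R) by apply Rmin_l.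
  assert (Hrad2 : (rad <= r - Cmod (z0 - u0 k))%R) by apply Rmin_r.
  set (zs := fun s => z0 + RtoC (clamp s) * (z - z0)).
  assert (Hzs : forall s, (Cmod (zs s - z0) <= Cmod (z - z0))%R).
  { intros s. unfold zs. replace (z0 + RtoC (clamp s) * (z - z0) - z0) with (RtoC (clamp s) * (z - z0)) by ring.
    rewrite Cmod_mult, Cmod_R. pose proof (clamp_range s). rewrite Rabs_pos_eq by lra.
    pose proof (Cmod_ge_0 (z - z0)). nra. }
  assert (Hin : forall s, polydisc g u0 r (upd u k (zs s))).
  { intros s. apply (disc_in _ rad); auto. specialize (Hzs s). lra. }
  set (phi := fun s => Re (W (upd u k (zs s)) t / W u t)).
  assert (E1 : zs 1%R = z).
  { unfold zs. rewrite clamp_id by lra. ring. }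
  assert (E0 : zs 0%R = z0).
  { unfold zs. rewrite clamp_id by lra. ring. }
  assert (P1 : (0 < phi 1)%R).
  { apply ivt_pos.
    - intros s. apply contpt_of. intros eps Heps.
      destruct HL as [_ [_ [_ [_ [_ [_ [_ Hwu]]]]]]].
      assert (Hm : (0 < Cmod (W u t))%R) by (apply Cmod_gt_0; apply W0_nz; auto).
      destruct (Hwu t Ht (upd u k (zs s)) (Hin s) (eps * Cmod (W u t))%R ltac:(nra)) as [del [Hdel' Hw]].
      exists (del / (Cmod (z - z0) + 1))%R. split.
      { apply Rdiv_lt_0_compat; auto. pose proof (Cmod_ge_0 (z - z0)); lra. }
      intros s' Hs'. unfold phi. rewrite <- Re_minus.
      eapply Rle_lt_trans. apply re_le_Cmod.
      replace (W (upd u k (zs s')) t / W u t - W (upd u k (zs s)) t / W u t)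
        with ((W (upd u k (zs s')) t - W (upd u k (zs s)) t) / W u t) by (field; apply W0_nz; auto).
      rewrite Cmod_div by (apply W0_nz; auto).
      apply Rmult_lt_reg_r with (Cmod (W u t)); auto. unfold Rdiv. rewrite Rmult_assoc, Rinv_l by lra.
      rewrite Rmult_1_r. apply Hw. apply Hin.
      intros i Hi. destruct (Nat.eq_dec i k) as [Ei|Ei].
      + subst i. rewrite !upd_k. unfold zs.
        replace (z0 + RtoC (clamp s') * (z - z0) - (z0 + RtoC (clamp s) * (z - z0)))
          with (RtoC (clamp s' - clamp s) * (z - z0)) by (rewrite RtoC_minus; ring).
        rewrite Cmod_mult, Cmod_R.
        pose proof (clamp_lip s' s). pose proof (Cmod_ge_0 (z - z0)).
        assert (Rabs (s' - s) * (Cmod (z - z0) + 1) < del)%R.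
        { apply Rmult_lt_reg_r with (/ (Cmod (z - z0) + 1))%R. apply Rinv_0_lt_compat; lra.
          rewrite Rmult_assoc, Rinv_r by lra. rewrite Rmult_1_r. exact Hs'. }
        assert (Rabs (clamp s' - clamp s) * Cmod (z - z0) <= Rabs (s' - s) * (Cmod (z - z0) + 1))%R.
        { apply Rmult_le_compat; try apply Rabs_pos; try lra. }
        lra.
      + rewrite !upd_other by auto. replace (u i - u i) with (RtoC 0) by ring. rewrite Cmod_0. auto.
    - unfold phi. rewrite E0. unfold z0. rewrite upd_same.
      replace (W u t / W u t) with (RtoC 1) by (field; apply W0_nz; auto). simpl. lra.
    - intros s Hs. unfold phi. apply (re_nz _ ((zs s - z0) / (x t - z0))).
      apply q_sq; auto.
      rewrite Cmod_div by (apply xz0_nz; auto).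
      assert (Hx := Hdel t Ht). specialize (Hzs s).
      apply Rmult_lt_reg_r with (Cmod (x t - z0)). lra.
      unfold Rdiv. rewrite Rmult_assoc, Rinv_l by lra. lra. }
  unfold phi in P1. rewrite E1 in P1. exact P1.
Qed.

Lemma W_close del0 : (0 < del0)%R -> (forall t, (0 <= t <= 1)%R -> (del0 <= Cmod (x t - z0))%R) ->
  forall z, (Cmod (z - z0) < Rmin (del0/2) (r - Cmod (z0 - u0 k)))%R ->
  forall t, (0 <= t <= 1)%R ->
  (Cmod (W (upd u k z) t - W u t) <= Cmod (W u t) * (Cmod (z - z0) / del0))%R.
Proof.
  intros Hd0 Hdel z Hz t Ht.
  assert (Hin : polydisc g u0 r (upd u k z)).
  { apply (disc_in _ (Rmin (del0/2) (r - Cmod (z0 - u0 k)))); auto. apply Rmin_r. }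
  assert (Hs := W_sign del0 Hd0 Hdel z Hz t Ht).
  assert (Hq := q_sq z Hin t Ht).
  assert (Hc := sqrt_close _ _ Hq Hs).
  assert (N0 := W0_nz t Ht). assert (N1 := xz0_nz t Ht).
  replace (W (upd u k z) t - W u t) with (W u t * (W (upd u k z) t / W u t - 1)) by (field; auto).
  rewrite Cmod_mult. apply Rmult_le_compat_l. apply Cmod_ge_0.
  eapply Rle_trans. exact Hc. rewrite Cmod_div by auto.
  unfold Rdiv. apply Rmult_le_compat_l. apply Cmod_ge_0.
  apply Rinv_le_contravar; auto.
Qed.

Lemma UC_W : UC z0 (fun z t => W (upd u k z) t) (W u).
Proof.
  destruct delta0_ex as [del0 [Hd0 Hdel]].
  destruct (cc_max (W u)) as [MW [HMW BMW]].
  { intros t Ht. destruct HL as [_ [_ [_ [_ [_ [_ [Hwc _]]]]]]]. apply cont_ccR. apply Hwc; auto. }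
  assert (Hr : (0 < r - Cmod (z0 - u0 k))%R) by (pose proof z0_in; lra).
  intros e He. exists (Rmin (Rmin (del0/2) (r - Cmod (z0 - u0 k))) (e * del0 / (2 * MW)))%R.
  split. { repeat apply Rmin_pos; try lra. apply Rdiv_lt_0_compat; nra. }
  intros z Hz t Ht.
  assert (Hz1 : (Cmod (z - z0) < Rmin (del0/2) (r - Cmod (z0 - u0 k)))%R) by (eapply Rlt_le_trans; [apply Hz|apply Rmin_l]).
  assert (Hz2 : (Cmod (z - z0) < e * del0 / (2 * MW))%R) by (eapply Rlt_le_trans; [apply Hz|apply Rmin_r]).
  eapply Rle_lt_trans. apply (W_close del0 Hd0 Hdel z Hz1 t Ht).
  apply Rle_lt_trans with (MW * (Cmod (z - z0) / del0))%R.
  apply Rmult_le_compat_r. apply Rmult_le_pos. apply Cmod_ge_0. left; apply Rinv_0_lt_compat; auto.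
  auto.
  apply Rle_lt_trans with (MW * ((e * del0 / (2 * MW)) / del0))%R.
  apply Rmult_le_compat_l. lra. unfold Rdiv. apply Rmult_le_compat_r. left; apply Rinv_0_lt_compat; auto. lra.
  replace (MW * (e * del0 / (2 * MW) / del0))%R with (e / 2)%R by (field; lra). lra.
Qed.

Lemma W_nz_near del0 : (0 < del0)%R -> (forall t, (0 <= t <= 1)%R -> (del0 <= Cmod (x t - z0))%R) ->
  forall z, (Cmod (z - z0) < Rmin (del0/2) (r - Cmod (z0 - u0 k)))%R ->
  forall t, (0 <= t <= 1)%R -> W (upd u k z) t <> 0 /\ W u t + W (upd u k z) t <> 0.
Proof.
  intros Hd0 Hdel z Hz t Ht.
  assert (Hs := W_sign del0 Hd0 Hdel z Hz t Ht). assert (N0 := W0_nz t Ht).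
  split.
  - intro E. rewrite E in Hs. replace (0 / W u t) with (RtoC 0) in Hs by (field; auto). simpl in Hs. lra.
  - intro E. replace (W (upd u k z) t) with (- W u t) in Hs.
    replace (- W u t / W u t) with (RtoC (-1)) in Hs by (field; auto). simpl in Hs. lra.
    replace (W (upd u k z) t) with ((W u t + W (upd u k z) t) - W u t) by ring. rewrite E. ring.
Qed.

Lemma deriv_loop (phi Hphi : C -> C -> C) rhop : (0 < rhop)%R ->
  (forall z, (Cmod (z - z0) < rhop)%R -> forall t, (0 <= t <= 1)%R -> cc dC (phi z) (x t)) ->
  (forall z, (Cmod (z - z0) < rhop)%R -> forall t, (0 <= t <= 1)%R ->
      phi z (x t) = phi z0 (x t) + (z - z0) * Hphi z (x t)) ->
  UC z0 (fun z t => Hphi z (x t)) (fun t => Hphi z0 (x t)) ->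
  (forall t, (0 <= t <= 1)%R -> cc dC (Hphi z0) (x t)) ->
  exists h, h z0 = RIntC (fun t => (Hphi z0 (x t) + phi z0 (x t) / (2 * (x t - z0))) * d t / W u t) 0 1 /\
    slopeC (fun z => RIntC (fun t => phi z (x t) * d t / W (upd u k z) t) 0 1) z0 h.
Proof.
  intros Hrhop P1 P2 P3 P4.
  destruct delta0_ex as [del0 [Hd0 Hdel]].
  assert (Hr : (0 < r - Cmod (z0 - u0 k))%R) by (pose proof z0_in; lra).
  set (rad := Rmin (del0/2) (r - Cmod (z0 - u0 k))).
  assert (Hrad : (0 < rad)%R) by (unfold rad; apply Rmin_pos; lra).
  set (rho1 := Rmin rad rhop).
  assert (Hrho1 : (0 < rho1)%R) by (unfold rho1; apply Rmin_pos; lra).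
  assert (R1 : forall z, (Cmod (z - z0) < rho1)%R -> (Cmod (z - z0) < rad)%R)
    by (intros z Hz; eapply Rlt_le_trans; [apply Hz|apply Rmin_l]).
  assert (R2 : forall z, (Cmod (z - z0) < rho1)%R -> (Cmod (z - z0) < rhop)%R)
    by (intros z Hz; eapply Rlt_le_trans; [apply Hz|apply Rmin_r]).
  assert (Hin : forall z, (Cmod (z - z0) < rho1)%R -> polydisc g u0 r (upd u k z)).
  { intros z Hz. apply (disc_in _ rad). apply Rmin_r. auto. }
  assert (Z0 : (Cmod (z0 - z0) < rho1)%R) by (replace (z0 - z0) with (RtoC 0) by ring; rewrite Cmod_0; auto).
  assert (Uz0 : upd u k z0 = u) by (unfold z0; apply upd_same).
  assert (Wcc : forall t, (0 <= t <= 1)%R -> cc dR (W u) t).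
  { intros t Ht. destruct HL as [_ [_ [_ [_ [_ [_ [Hwc _]]]]]]]. apply cont_ccR. apply Hwc; auto. }
  assert (Dcc : forall t, (0 <= t <= 1)%R -> cc dR d t).
  { intros t Ht. destruct HL as [_ [_ [Hdc _]]]. apply cont_ccR. apply Hdc; auto. }
  set (Wz := fun z t => W (upd u k z) t).
  set (Htot := fun z t => Hphi z (x t) * d t * / Wz z t +
     phi z0 (x t) * d t * (W u t * / ((x t - z0) * Wz z t * (W u t + Wz z t)))).
  set (Htot0 := fun t => Hphi z0 (x t) * d t * / W u t +
     phi z0 (x t) * d t * (W u t * / ((x t - z0) * W u t * (W u t + W u t)))).
  set (G := fun z t => phi z (x t) * d t / W (upd u k z) t).
  assert (NZ : forall z, (Cmod (z - z0) < rho1)%R -> forall t, (0 <= t <= 1)%R ->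
            Wz z t <> 0 /\ W u t + Wz z t <> 0).
  { intros z Hz t Ht. apply (W_nz_near del0); auto. }
  assert (PW : forall z, (Cmod (z - z0) < rho1)%R -> forall t, (0 <= t <= 1)%R ->
            Wz z t * Wz z t * (x t - z0) = W u t * W u t * (x t - z0) - W u t * W u t * (z - z0)).
  { intros z Hz t Ht. assert (Q := q_sq z (Hin z Hz) t Ht).
    assert (N0 := W0_nz t Ht). assert (N1 := xz0_nz t Ht).
    assert (E : Wz z t * Wz z t = (W (upd u k z) t / W u t * (W (upd u k z) t / W u t)) * (W u t * W u t))
      by (unfold Wz; field; auto).
    rewrite E, Q. field. auto. }
  assert (Gid : forall z, (Cmod (z - z0) < rho1)%R -> forall t, (0 <= t <= 1)%R ->
            G z t = G z0 t + (z - z0) * Htot z t).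
  { intros z Hz t Ht. destruct (NZ z Hz t Ht) as [N2 N3].
    assert (N0 := W0_nz t Ht). assert (N1 := xz0_nz t Ht).
    unfold G, Htot. rewrite Uz0. rewrite (P2 z (R2 z Hz) t Ht). fold (Wz z t).
    assert (Key : / Wz z t - / W u t = (z - z0) * (W u t * / ((x t - z0) * Wz z t * (W u t + Wz z t)))).
    { replace (/ Wz z t - / W u t) with ((W u t - Wz z t) * (x t - z0) * (W u t + Wz z t) / (Wz z t * W u t * (x t - z0) * (W u t + Wz z t)))
        by (field; repeat split; auto).
      replace ((W u t - Wz z t) * (x t - z0) * (W u t + Wz z t)) with ((z - z0) * W u t * W u t).
      field. repeat split; auto.
      transitivity (W u t * W u t * (x t - z0) - Wz z t * Wz z t * (x t - z0)). 2: ring.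
      rewrite (PW z Hz t Ht). ring. }
    transitivity (phi z0 (x t) * d t * / W u t + (z - z0) * Hphi z (x t) * d t * / Wz z t +
                  phi z0 (x t) * d t * (/ Wz z t - / W u t)).
    unfold Cdiv. ring. rewrite Key. unfold Cdiv. ring. }
  assert (ExG : forall z, (Cmod (z - z0) < rho1)%R -> exC (G z)).
  { intros z Hz. unfold G. apply (loop_exC g _ x d W (upd u k z) (phi z) HL (Hin z Hz)).
    intros t Ht. apply P1; auto. }
  assert (ExH0 : exC (fun t => (Hphi z0 (x t) + phi z0 (x t) / (2 * (x t - z0))) * d t / W u t)).
  { apply (loop_exC g _ x d W u (fun y => Hphi z0 y + phi z0 y / (2 * (y - z0))) HL Hu).
    intros t Ht. apply cc_plus. auto. unfold Cdiv. apply cc_mult. apply P1; auto.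
    apply cc_inv. apply cc_mult. apply cc_const. apply cc_minus. apply ccC_id. apply cc_const.
    apply Cmult_neq_0. intro E. apply RtoC_inj in E. lra. apply xz0_nz; auto. }
  assert (Htot_z0 : forall t, (0 <= t <= 1)%R ->
    Htot z0 t = (Hphi z0 (x t) + phi z0 (x t) / (2 * (x t - z0))) * d t / W u t).
  { intros t Ht. unfold Htot, Wz. rewrite Uz0. assert (N0 := W0_nz t Ht). assert (N1 := xz0_nz t Ht).
    field. repeat split; auto. replace (W u t + W u t) with (2 * W u t) by ring.
    apply Cmult_neq_0; auto. intro E. apply RtoC_inj in E. lra. }
  assert (ExH : forall z, (Cmod (z - z0) < rho1)%R -> exC (Htot z)).
  { intros z Hz. destruct (Ceq_dec z z0) as [E|E].
    - subst z. eapply exC_ext. 2: exact ExH0. intros t Ht. rewrite Htot_z0; auto.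
    - assert (Ez : z - z0 <> 0). { intro Z. apply E. replace z with ((z - z0) + z0) by ring. rewrite Z. ring. }
      apply (exC_ext (fun t => / (z - z0) * (G z t - G z0 t))).
      intros t Ht. rewrite (Gid z Hz t Ht). field. auto.
      apply exC_cmult. apply exC_minus; auto. }
  exists (fun z => RIntC (Htot z) 0 1). split.
  - apply RIntC_ext. auto.
  - split.
    + exists rho1. split; auto. intros z Hz. fold (G z). fold (G z0).
      rewrite (RIntC_ext (G z) (fun t => G z0 t + (z - z0) * Htot z t)) by (intros; apply Gid; auto).
      rewrite RIntC_plus, RIntC_cmult; auto. apply exC_cmult; auto.
    + apply (UC_RInt z0 Htot Htot0).
      *
        assert (UW := UC_W). fold Wz in UW.
        assert (BW : bnd (W u)) by (apply bnd_cc; auto).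
        assert (LW : lbd (W u)) by (apply lbd_cc; auto; apply W0_nz).
        assert (BD : bnd d) by (apply bnd_cc; auto).
        assert (LX : lbd (fun t => x t - z0)).
        { exists del0. split; auto. }
        assert (BX : bnd (fun t => x t - z0)).
        { apply bnd_cc. intros t Ht. apply cc_minus. apply x_cc; auto. apply cc_const. }
        assert (LWW : lbd (fun t => W u t + W u t)).
        { destruct LW as [mw [Hmw Bmw]]. exists (2 * mw)%R. split. lra. intros t Ht.
          replace (W u t + W u t) with (RtoC 2 * W u t) by ring. rewrite Cmod_mult, Cmod_R, Rabs_pos_eq by lra.
          specialize (Bmw t Ht). lra. }
        assert (BWW : bnd (fun t => W u t + W u t)).
        { destruct BW as [M [HM BM]]. exists (2 * M)%R. split. lra. intros t Ht.
          replace (W u t + W u t) with (RtoC 2 * W u t) by ring. rewrite Cmod_mult, Cmod_R, Rabs_pos_eq by lra.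
          specialize (BM t Ht). lra. }
        assert (BH : bnd (fun t => Hphi z0 (x t))).
        { apply bnd_cc. intros t Ht. apply cc_compC. apply x_cc; auto. apply P4; auto. }
        assert (BP : bnd (fun t => phi z0 (x t))).
        { apply bnd_cc. intros t Ht. apply cc_compC. apply x_cc; auto. apply P1; auto. }
        unfold Htot, Htot0.
        apply (UC_plus z0 (fun z t => Hphi z (x t) * d t * / Wz z t) (fun z t => phi z0 (x t) * d t * (W u t * / ((x t - z0) * Wz z t * (W u t + Wz z t))))).
        -- apply UC_mult. apply (UC_mult z0 (fun z t => Hphi z (x t)) (fun _ t => d t)); auto.
           apply UC_const. apply UC_inv; auto. apply bnd_mult; auto. apply bnd_inv; auto.
        -- apply (UC_mult z0 (fun _ t => phi z0 (x t) * d t) (fun z t => W u t * / ((x t - z0) * Wz z t * (W u t + Wz z t)))).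
           apply UC_const.
           apply (UC_mult z0 (fun _ t => W u t) (fun z t => / ((x t - z0) * Wz z t * (W u t + Wz z t)))).
           apply UC_const.
           apply (UC_inv z0 (fun z t => (x t - z0) * Wz z t * (W u t + Wz z t))).
           apply (UC_mult z0 (fun z t => (x t - z0) * Wz z t) (fun z t => W u t + Wz z t)).
           apply (UC_mult z0 (fun _ t => x t - z0) Wz). apply UC_const. auto. auto. auto.
           apply (UC_plus z0 (fun _ t => W u t) Wz). apply UC_const. auto.
           apply bnd_mult; auto. auto.
           apply lbd_mult; auto. apply lbd_mult; auto.
           auto. apply bnd_inv. apply lbd_mult; auto. apply lbd_mult; auto.
           apply bnd_mult; auto. apply bnd_mult; auto. apply bnd_inv. apply lbd_mult; auto. apply lbd_mult; auto.
      * intros t Ht. unfold Htot, Htot0, Wz. rewrite Uz0. reflexivity.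
      * exists rho1. split; auto.
Qed.

End Loop.

Lemma slopeC_plus f g z h k : slopeC f z h -> slopeC g z k ->
  slopeC (fun s => f s + g s) z (fun s => h s + k s).
Proof.
  intros [[d1 [Hd1 H1]] C1] [[d2 [Hd2 H2]] C2]. split.
  - exists (Rmin d1 d2). split. apply Rmin_pos; auto. intros s Hs.
    rewrite (H1 s) by (eapply Rlt_le_trans; [apply Hs|apply Rmin_l]).
    rewrite (H2 s) by (eapply Rlt_le_trans; [apply Hs|apply Rmin_r]). ring.
  - apply cc_plus; auto.
Qed.

Lemma slopeC_ext f g z h : (forall s, f s = g s) -> slopeC f z h -> slopeC g z h.
Proof.
  intros E [[d [Hd H]] Cc]. split; auto. exists d. split; auto. intros s Hs. rewrite <- !E. auto.
Qed.

Lemma slopeC_cmul (a : C) f z h : slopeC f z h -> slopeC (fun s => a * f s) z (fun s => a * h s).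
Proof.
  intros [[d [Hd H]] Cc]. split.
  - exists d. split; auto. intros s Hs. rewrite (H s Hs). ring.
  - apply cc_mult. apply cc_const. auto.
Qed.

Section Per2.
Variables (g : nat) (u0 : nat -> C) (r : R) (m : nat) (c : nat -> C) (p dp : nat -> R -> C)
  (w : nat -> (nat -> C) -> R -> C) (u : nat -> C) (k : nat).
Hypothesis HLs : forall l, (l < m)%nat -> lifted_loop g (polydisc g u0 r) (p l) (dp l) (w l).
Hypothesis Hu : polydisc g u0 r u.
Hypothesis Hk : (2 <= k <= 2 * g + 1)%nat.

Lemma period_slope (phi Hphi : C -> C -> C) :
  (forall l, (l < m)%nat -> exists rhop, (0 < rhop)%R /\
    (forall z, (Cmod (z - u k) < rhop)%R -> forall t, (0 <= t <= 1)%R -> cc dC (phi z) (p l t)) /\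
    (forall z, (Cmod (z - u k) < rhop)%R -> forall t, (0 <= t <= 1)%R ->
      phi z (p l t) = phi (u k) (p l t) + (z - u k) * Hphi z (p l t)) /\
    UC (u k) (fun z t => Hphi z (p l t)) (fun t => Hphi (u k) (p l t)) /\
    (forall t, (0 <= t <= 1)%R -> cc dC (Hphi (u k)) (p l t))) ->
  exists h, h (u k) = period m c p dp w u (fun y => Hphi (u k) y + phi (u k) y / (2 * (y - u k))) /\
    slopeC (fun z => period m c p dp w (upd u k z) (phi z)) (u k) h.
Proof.
  intros Hyp. unfold period.
  assert (Gen : forall n, (n <= m)%nat -> exists h, h (u k) =
    csum_from 0 n (fun l => c l * RIntC (fun t => (fun y => Hphi (u k) y + phi (u k) y / (2 * (y - u k))) (p l t) * dp l t / w l u t) 0 1) /\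
    slopeC (fun z => csum_from 0 n (fun l => c l * RIntC (fun t => phi z (p l t) * dp l t / w l (upd u k z) t) 0 1)) (u k) h).
  { induction n; intros Hn.
    - exists (fun _ => 0). split. reflexivity. simpl. apply (slopeC_const 0).
    - destruct IHn as [h1 [E1 S1]]. lia.
      destruct (Hyp n ltac:(lia)) as [rhop [Hr [P1 [P2 [P3 P4]]]]].
      destruct (deriv_loop g u0 r (p n) (dp n) (w n) u k (HLs n ltac:(lia)) Hu Hk phi Hphi rhop Hr P1 P2 P3 P4)
        as [h2 [E2 S2]].
      exists (fun z => h1 z + c (0 + n)%nat * h2 z). split.
      + simpl. rewrite E1, E2. reflexivity.
      + simpl. apply slopeC_plus; auto. apply slopeC_cmul. auto. }
  destruct (Gen m (le_n m)) as [h [E S]]. exists h. split; auto.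
Qed.
End Per2.

Lemma UC_zero z0 : UC z0 (fun _ _ => RtoC 0) (fun _ => RtoC 0).
Proof. apply (UC_const z0 (fun _ => RtoC 0)). Qed.

Lemma nz_of_neq (a b : C) : a <> b -> a - b <> 0.
Proof. intros H E. apply H. replace a with ((a - b) + b) by ring. rewrite E. ring. Qed.

Section Per3.
Variables (g : nat) (u0 : nat -> C) (r : R) (m : nat) (c : nat -> C) (p dp : nat -> R -> C)
  (w : nat -> (nat -> C) -> R -> C) (u : nat -> C) (k : nat).
Hypothesis HLs : forall l, (l < m)%nat -> lifted_loop g (polydisc g u0 r) (p l) (dp l) (w l).
Hypothesis Hu : polydisc g u0 r u.
Hypothesis Hk : (2 <= k <= 2 * g + 1)%nat.

Lemma pav l t : (l < m)%nat -> (0 <= t <= 1)%R -> p l t <> 0 /\ forall i, (2 <= i <= 2 * g + 1)%nat -> p l t <> u i.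
Proof. intros Hl Ht. destruct (HLs l Hl) as [_ [_ [_ [Hav _]]]]. apply Hav; auto. Qed.

Lemma slope_one : exists h, h (u k) = period m c p dp w u (fun y => 0 + 1 / (2 * (y - u k))) /\
  slopeC (fun z => period m c p dp w (upd u k z) (fun _ => 1)) (u k) h.
Proof.
  apply (period_slope g u0 r m c p dp w u k HLs Hu Hk (fun _ _ => 1) (fun _ _ => 0)).
  intros l Hl. exists 1%R. split. lra. split; [|split; [|split]].
  - intros. apply cc_const.
  - intros. ring.
  - apply UC_zero.
  - intros. apply cc_const.
Qed.

Lemma slope_cst (a : C) : (forall l t, (l < m)%nat -> (0 <= t <= 1)%R -> p l t <> a) ->
  exists h, h (u k) = period m c p dp w u (fun y => 0 + / (y - a) / (2 * (y - u k))) /\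
  slopeC (fun z => period m c p dp w (upd u k z) (fun y => / (y - a))) (u k) h.
Proof.
  intros Ha.
  apply (period_slope g u0 r m c p dp w u k HLs Hu Hk (fun _ y => / (y - a)) (fun _ _ => 0)).
  intros l Hl. exists 1%R. split. lra. split; [|split; [|split]].
  - intros z Hz t Ht. apply cc_inv. apply cc_minus. apply ccC_id. apply cc_const.
    apply nz_of_neq. apply Ha; auto.
  - intros. ring.
  - apply UC_zero.
  - intros. apply cc_const.
Qed.

Lemma slope_var : exists h, h (u k) =
    period m c p dp w u (fun y => / ((y - u k) * (y - u k)) + / (y - u k) / (2 * (y - u k))) /\
  slopeC (fun z => period m c p dp w (upd u k z) (fun y => / (y - z))) (u k) h.
Proof.
  apply (period_slope g u0 r m c p dp w u k HLs Hu Hk (fun z y => / (y - z)) (fun z y => / ((y - z) * (y - u k)))).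
  intros l Hl.
  destruct (delta0_ex g u0 r (p l) (dp l) (w l) u k (HLs l Hl) Hu Hk) as [del0 [Hd0 Hdel]].
  assert (Far : forall z, (Cmod (z - u k) < del0 / 2)%R -> forall t, (0 <= t <= 1)%R ->
            (del0 / 2 < Cmod (p l t - z))%R).
  { intros z Hz t Ht. specialize (Hdel t Ht). pose proof (Cmod_tri3 (p l t) z (u k)).
    lra. }
  assert (NZ : forall z, (Cmod (z - u k) < del0 / 2)%R -> forall t, (0 <= t <= 1)%R -> p l t - z <> 0).
  { intros z Hz t Ht E. specialize (Far z Hz t Ht). rewrite E, Cmod_0 in Far. lra. }
  assert (NZ0 : forall t, (0 <= t <= 1)%R -> p l t - u k <> 0).
  { intros t Ht. apply NZ; auto. replace (u k - u k) with (RtoC 0) by ring. rewrite Cmod_0. lra. }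
  exists (del0 / 2)%R. split. lra. split; [|split; [|split]].
  - intros z Hz t Ht. apply cc_inv. apply cc_minus. apply ccC_id. apply cc_const. apply NZ; auto.
  - intros z Hz t Ht. field. split; auto.
  - apply (UC_inv (u k) (fun z t => (p l t - z) * (p l t - u k)) (fun t => (p l t - u k) * (p l t - u k))).
    + apply (UC_mult (u k) (fun z t => p l t - z) (fun _ t => p l t - u k)).
      * intros e He. exists e. split; auto. intros z Hz t Ht.
        replace (p l t - z - (p l t - u k)) with (- (z - u k)) by ring. rewrite Cmod_opp. auto.
      * apply UC_const.
      * apply bnd_cc. intros t Ht. apply cc_minus. apply (x_cc g u0 r (p l) (dp l) (w l) (HLs l Hl)); auto. apply cc_const.
      * apply bnd_cc. intros t Ht. apply cc_minus. apply (x_cc g u0 r (p l) (dp l) (w l) (HLs l Hl)); auto. apply cc_const.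
    + apply lbd_mult; exists del0; split; auto.
  - intros t Ht. apply cc_inv. apply cc_mult; apply cc_minus; try apply ccC_id; apply cc_const.
    apply Cmult_neq_0; apply NZ0; auto.
Qed.
End Per3.

Lemma mat_ext (A B : mat2) : m11 A = m11 B -> m12 A = m12 B -> m21 A = m21 B -> m22 A = m22 B -> A = B.
Proof. destruct A, B; simpl; intros; subst; auto. Qed.

Lemma m11_msum lo n f : m11 (msum_from lo n f) = csum_from lo n (fun j => m11 (f j)).
Proof. induction n; simpl; auto. rewrite IHn. auto. Qed.
Lemma m12_msum lo n f : m12 (msum_from lo n f) = csum_from lo n (fun j => m12 (f j)).
Proof. induction n; simpl; auto. rewrite IHn. auto. Qed.
Lemma m21_msum lo n f : m21 (msum_from lo n f) = csum_from lo n (fun j => m21 (f j)).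
Proof. induction n; simpl; auto. rewrite IHn. auto. Qed.
Lemma m22_msum lo n f : m22 (msum_from lo n f) = csum_from lo n (fun j => m22 (f j)).
Proof. induction n; simpl; auto. rewrite IHn. auto. Qed.

Lemma comm_diag (A B : mat2) : m21 A = 0 -> m21 B = 0 ->
  m11 (mcomm A B) = 0 /\ m21 (mcomm A B) = 0 /\ m22 (mcomm A B) = 0.
Proof.
  destruct A, B; simpl; intros H1 H2; subst. unfold mcomm, madd, mopp, mscale, mmul; simpl.
  repeat split; ring.
Qed.

Lemma csum_zero lo n (f : nat -> C) : (forall i, (lo <= i < lo + n)%nat -> f i = 0) -> csum_from lo n f = 0.
Proof.
  intros H. rewrite (csum_ext lo n f (fun _ => 0 * 0)). rewrite csum_scal. ring.
  intros i Hi. rewrite H; auto. ring.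
Qed.

Section Fin.
Variables (m : nat) (c : nat -> C) (p dp : nat -> R -> C) (w : nat -> (nat -> C) -> R -> C).

Lemma Amat_m21 v i : m21 (Amat m c p dp w v i) = 0.
Proof. unfold Amat. destruct (Nat.eqb i 1); reflexivity. Qed.
Lemma Amat_m11 v v' i : m11 (Amat m c p dp w v i) = m11 (Amat m c p dp w v' i).
Proof. unfold Amat. destruct (Nat.eqb i 1); reflexivity. Qed.
Lemma Amat_m22 v v' i : m22 (Amat m c p dp w v i) = m22 (Amat m c p dp w v' i).
Proof. unfold Amat. destruct (Nat.eqb i 1); reflexivity. Qed.
Lemma Amat_m12 v i : m12 (Amat m c p dp w v i) = acoef m c p dp w v i.
Proof. unfold Amat. destruct (Nat.eqb_spec i 1); subst; reflexivity. Qed.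

Lemma acoef_1 v : acoef m c p dp w v 1 = - period m c p dp w v (fun _ => 1).
Proof. reflexivity. Qed.
Lemma acoef_i v i : i <> 1%nat -> acoef m c p dp w v i =
  period m c p dp w v (fun _ => 1) + v i * period m c p dp w v (fun z => / (z - v i)).
Proof. intros H. unfold acoef. destruct (Nat.eqb_spec i 1); [lia|reflexivity]. Qed.

Lemma Ainf_const g (S : C) u u' : csum_from 1 (2 * g + 1) (fun i => acoef m c p dp w u i) = S ->
  csum_from 1 (2 * g + 1) (fun i => acoef m c p dp w u' i) = S ->
  Ainf g m c p dp w u = Ainf g m c p dp w u'.
Proof.
  intros H1 H2. unfold Ainf, mopp, mscale. apply mat_ext; cbn [m11 m12 m21 m22].
  - rewrite !m11_msum. f_equal. apply csum_ext. intros. apply Amat_m11.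
  - rewrite !m12_msum. f_equal. rewrite (csum_ext _ _ _ (fun i => acoef m c p dp w u i)).
    rewrite (csum_ext _ _ (fun j => m12 (Amat m c p dp w u' j)) (fun i => acoef m c p dp w u' i)).
    congruence. intros; apply Amat_m12. intros; apply Amat_m12.
  - rewrite !m21_msum. f_equal. apply csum_ext. intros. rewrite !Amat_m21. auto.
  - rewrite !m22_msum. f_equal. apply csum_ext. intros. apply Amat_m22.
Qed.
End Fin.

Section Fin2.
Variables (g : nat) (u0 : nat -> C) (r : R) (m : nat) (c : nat -> C) (p dp : nat -> R -> C)
  (w : nat -> (nat -> C) -> R -> C) (u : nat -> C).
Hypothesis HLs : forall l, (l < m)%nat -> lifted_loop g (polydisc g u0 r) (p l) (dp l) (w l).
Hypothesis Hu : polydisc g u0 r u.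

Let P := period m c p dp w u.
Let U := polydisc g u0 r.

Lemma pav2 l t : (l < m)%nat -> (0 <= t <= 1)%R -> p l t <> 0 /\ forall i, (2 <= i <= 2 * g + 1)%nat -> p l t <> u i.
Proof. intros Hl Ht. destruct (HLs l Hl) as [_ [_ [_ [Hav _]]]]. apply Hav; auto. Qed.

Lemma period_scal (a : C) phi : padm m p phi -> P (fun y => a * phi y) = a * P phi.
Proof.
  intros H. unfold P.
  rewrite (period_ext m c p dp w u _ (fun y => a * phi y + 0 * phi y)).
  rewrite (period_lin g m U c p dp w HLs); auto. toC. ring.
  intros. ring.
Qed.

Lemma padm_const (a : C) : padm m p (fun _ => a).
Proof. intros l Hl t Ht. apply cc_const. Qed.

Lemma padm_inv (a : C) : (forall l t, (l < m)%nat -> (0 <= t <= 1)%R -> p l t <> a) ->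
  padm m p (fun y => / (y - a)).
Proof.
  intros H l Hl t Ht. apply cc_inv. apply cc_minus. apply ccC_id. apply cc_const.
  apply nz_of_neq. apply H; auto.
Qed.

Lemma avoid_i i : (2 <= i <= 2 * g + 1)%nat -> forall l t, (l < m)%nat -> (0 <= t <= 1)%R -> p l t <> u i.
Proof. intros Hi l t Hl Ht. apply (pav2 l t Hl Ht); auto. Qed.

Lemma avoid_0 : forall l t, (l < m)%nat -> (0 <= t <= 1)%R -> p l t <> 0.
Proof. intros l t Hl Ht. apply (pav2 l t Hl Ht); auto. Qed.

Lemma sum_acoef_zero : csum_from 1 (2 * g + 1) (fun i => acoef m c p dp w u i) = 0.
Proof.
  replace (2 * g + 1)%nat with (S (2 * g)) by lia. rewrite csum_shift1.
  rewrite acoef_1.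
  rewrite (csum_ext 2 (2*g) _ (fun i => period m c p dp w u (fun _ => 1) + u i * period m c p dp w u (fun z => / (z - u i)))).
  2: { intros i Hi. apply acoef_i. lia. }
  rewrite csum_plus, csum_const. fold P.
  rewrite (csum_ext 2 (2*g) _ (fun i => P (fun y => u i * / (y - u i)))).
  2: { intros i Hi. rewrite period_scal. reflexivity. apply padm_inv. apply avoid_i. lia. }
  unfold P at 3. rewrite <- (period_csum g m U c p dp w HLs u 2 (2*g) (fun i y => u i * / (y - u i))); auto.
  2: { intros i Hi l Hl t Ht. apply cc_mult. apply cc_const. apply (padm_inv (u i)); auto.
       intros; apply avoid_i; auto; lia. }
  fold P.
  transitivity (P (fun y => (INR (2 * g) - 1) * (fun _ => RtoC 1) y + 1 * (fun y => csum_from 2 (2 * g) (fun i => u i * / (y - u i))) y)).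
  { unfold P. rewrite (period_lin g m U c p dp w HLs); auto. toC. ring.
    apply padm_const. apply padm_csum. intros i Hi l Hl t Ht. apply cc_mult. apply cc_const.
    apply (padm_inv (u i)); auto. intros; apply avoid_i; auto; lia. }
  transitivity (P (fun y => (-2) * (fun y => (fun _ => RtoC 1) y - (fun y => y) y * Lg g u y / 2) y + 0 * (fun _ => RtoC 1) y)).
  { unfold P. apply period_ext. intros l Hl t Ht. cbv beta.
    assert (N0 := avoid_0 l t Hl Ht).
    set (y := p l t) in *.
    set (S := csum_from 2 (2 * g) (fun i => / (y - u i))).
    set (T := csum_from 2 (2 * g) (fun i => u i * / (y - u i))).
    assert (S1 : y * S = INR (2 * g) + T).
    { unfold S, T. rewrite <- csum_scal.
      rewrite (csum_ext 2 (2*g) _ (fun i => 1 + u i * / (y - u i))).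
      rewrite csum_plus, csum_const. ring.
      intros i Hi. field. apply nz_of_neq. apply avoid_i; auto. lia. }
    unfold Lg. fold S. replace T with (y * S - INR (2 * g)) by (rewrite S1; ring).
    field. auto. }
  unfold P. rewrite (period_lin g m U c p dp w HLs); auto.
  rewrite (period_exact g m U c p dp w HLs u (fun y => y) (fun _ => 1)); auto. toC. ring.
  - intros l Hl t Ht. split. apply (slopeC_derive (fun y => y) (p l t) (fun _ => 1)). apply slopeC_id. apply cc_const.
  - intros l Hl t Ht. apply cc_minus. apply cc_const. apply cc_mult. apply cc_mult. apply ccC_id.
    apply Lg_cc. apply avoid_0; auto. intros i Hi. apply avoid_i; auto. apply cc_const.
  - apply padm_const.
Qed.
End Fin2.

Lemma quarter : RtoC (1/4) = / 4.
Proof. unfold Cinv, RtoC; simpl. f_equal; field. Qed.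
Lemma mquarter : RtoC (-1/4) = - / 4.
Proof. unfold Cinv, Copp, RtoC; simpl. f_equal; field. Qed.

Lemma const_entry (f : C -> C) (z0 v : C) : (forall z, f z = f z0) -> v = RtoC 0 -> is_derive (K := C_AbsRing) f z0 v.
Proof.
  intros H Hv. subst v. eapply is_deriveC_val. apply (slopeC_derive f z0 (fun _ => 0)).
  split. exists 1%R. split. lra. intros. rewrite H. ring. apply cc_const. reflexivity.
Qed.

Lemma two_nz : (2 : C) <> 0.
Proof. intro E. apply RtoC_inj in E. lra. Qed.

Section Fin3.
Variables (g : nat) (u0 : nat -> C) (r : R) (m : nat) (c : nat -> C) (p dp : nat -> R -> C)
  (w : nat -> (nat -> C) -> R -> C) (u : nat -> C) (k : nat).
Hypothesis HLs : forall l, (l < m)%nat -> lifted_loop g (polydisc g u0 r) (p l) (dp l) (w l).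
Hypothesis Hu : polydisc g u0 r u.
Hypothesis Hk : (2 <= k <= 2 * g + 1)%nat.
Hypothesis Hnz : forall i, (2 <= i <= 2 * g + 1)%nat -> u i <> 0.
Hypothesis Hdist : forall i j, (2 <= i <= 2 * g + 1)%nat -> (2 <= j <= 2 * g + 1)%nat -> i <> j -> u i <> u j.

Let P := period m c p dp w u.
Let U := polydisc g u0 r.
Let J i := P (fun y => / (y - u i)).

Lemma L1 : P (fun y => 0 + 1 / (2 * (y - u k))) = / 2 * J k.
Proof.
  unfold J. rewrite <- (period_scal g u0 r m c p dp w u HLs Hu). fold P.
  unfold P. apply period_ext. intros l Hl t Ht. field. apply nz_of_neq.
  apply (avoid_i g u0 r m p dp w u HLs Hu k Hk); auto.
  apply padm_inv. intros l0 t0 Hl0 Ht0. apply (avoid_i g u0 r m p dp w u HLs Hu k Hk); auto.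
Qed.

Lemma L2 j : (2 <= j <= 2 * g + 1)%nat -> j <> k ->
  P (fun y => 0 + / (y - u j) / (2 * (y - u k))) = / (2 * (u k - u j)) * J k + (- / (2 * (u k - u j))) * J j.
Proof.
  intros Hj Hjk. unfold J, P.
  rewrite <- (period_lin g m U c p dp w HLs u _ _ _ _ Hu).
  apply period_ext. intros l Hl t Ht.
  assert (N1 := avoid_i g u0 r m p dp w u HLs Hu k Hk l t Hl Ht).
  assert (N2 := avoid_i g u0 r m p dp w u HLs Hu j Hj l t Hl Ht).
  assert (N3 := Hdist k j Hk Hj (not_eq_sym Hjk)).
  field. repeat split; auto using nz_of_neq, two_nz.
  apply padm_inv. intros l0 t0 Hl0 Ht0. apply (avoid_i g u0 r m p dp w u HLs Hu k Hk); auto.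
  apply padm_inv. intros l0 t0 Hl0 Ht0. apply (avoid_i g u0 r m p dp w u HLs Hu j Hj); auto.
Qed.

Lemma entry_diag j (f : mat2 -> C) : (f = m11 \/ f = m21 \/ f = m22) ->
  is_derive (K := C_AbsRing) (fun z => f (Amat m c p dp w (upd u k z) j)) (u k)
    (f (mscale (/ (uu u k - uu u j)) (mcomm (Amat m c p dp w u k) (Amat m c p dp w u j)))).
Proof.
  intros Hf. apply const_entry.
  - intros z. destruct Hf as [E|[E|E]]; subst f.
    apply Amat_m11. rewrite !Amat_m21; auto. apply Amat_m22.
  - destruct (comm_diag (Amat m c p dp w u k) (Amat m c p dp w u j)) as [A1 [A2 A3]].
    apply Amat_m21. apply Amat_m21.
    destruct Hf as [E|[E|E]]; subst f; cbn [m11 m21 m22 mscale].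
    rewrite A1; ring. rewrite A2; ring. rewrite A3; ring.
Qed.

Lemma deriv_offdiag j : (1 <= j <= 2 * g + 1)%nat -> j <> k ->
  is_mderiv (fun z => Amat m c p dp w (upd u k z) j) (u k)
    (mscale (/ (uu u k - uu u j)) (mcomm (Amat m c p dp w u k) (Amat m c p dp w u j))).
Proof.
  intros Hj Hjk. unfold is_mderiv. split; [|split; [|split]].
  - apply (entry_diag j m11). auto.
  - destruct (slope_one g u0 r m c p dp w u k HLs Hu Hk) as [h1 [E1 S1]].
    assert (Hk1 : Nat.eqb k 1 = false) by (apply Nat.eqb_neq; lia).
    assert (Uk : uu u k = u k) by (unfold uu; rewrite Hk1; auto).
    destruct (Nat.eq_dec j 1) as [Ej|Ej].
    + subst j.
      assert (S := slopeC_cmul (-1) _ _ _ S1).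
      apply (slopeC_ext _ (fun z => m12 (Amat m c p dp w (upd u k z) 1))) in S.
      2: { intros z. rewrite Amat_m12, acoef_1. toC. ring. }
      apply slopeC_derive in S. eapply is_deriveC_val. exact S. cbv beta.
      rewrite E1. fold P. rewrite L1.
      unfold mscale, mcomm, madd, mopp, mmul. cbn [m11 m12 m21 m22].
      rewrite Uk. unfold uu. simpl Nat.eqb.
      unfold Amat. rewrite Hk1. simpl Nat.eqb. cbn [m11 m12 m21 m22].
      rewrite acoef_1, acoef_i by lia. fold P. fold (J k).
      rewrite quarter, mquarter. unfold mscale; cbn [m11 m12 m21 m22]. assert (Nk := Hnz k Hk). toC. field. repeat split; auto using two_nz.
    + assert (Hj2 : (2 <= j <= 2 * g + 1)%nat) by lia.
      destruct (slope_cst g u0 r m c p dp w u k HLs Hu Hk (u j)) as [h2 [E2 S2]].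
      { intros l t Hl Ht. apply (avoid_i g u0 r m p dp w u HLs Hu); auto. }
      assert (S := slopeC_plus _ _ _ _ _ S1 (slopeC_cmul (u j) _ _ _ S2)).
      apply (slopeC_ext _ (fun z => m12 (Amat m c p dp w (upd u k z) j))) in S.
      2: { intros z. rewrite Amat_m12, acoef_i by lia. rewrite upd_other by lia. reflexivity. }
      apply slopeC_derive in S. eapply is_deriveC_val. exact S. cbv beta.
      rewrite E1, E2. fold P. rewrite L1, L2 by auto.
      unfold mscale, mcomm, madd, mopp, mmul. cbn [m11 m12 m21 m22].
      assert (Hj1 : Nat.eqb j 1 = false) by (apply Nat.eqb_neq; lia).
      rewrite Uk. unfold uu. rewrite Hj1.
      unfold Amat. rewrite Hk1, Hj1. cbn [m11 m12 m21 m22].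
      rewrite !acoef_i by lia. fold P. fold (J k). fold (J j).
      rewrite quarter, mquarter. unfold mscale; cbn [m11 m12 m21 m22].
      assert (N3 := Hdist k j Hk Hj2 (not_eq_sym Hjk)).
      toC. field. repeat split; auto using two_nz, nz_of_neq.
  - apply (entry_diag j m21). auto.
  - apply (entry_diag j m22). auto.
Qed.
End Fin3.

Section Fin4.
Variables (g : nat) (u0 : nat -> C) (r : R) (m : nat) (c : nat -> C) (p dp : nat -> R -> C)
  (w : nat -> (nat -> C) -> R -> C) (u : nat -> C) (k : nat).
Hypothesis HLs : forall l, (l < m)%nat -> lifted_loop g (polydisc g u0 r) (p l) (dp l) (w l).
Hypothesis Hu : polydisc g u0 r u.
Hypothesis Hk : (2 <= k <= 2 * g + 1)%nat.
Hypothesis Hnz : forall i, (2 <= i <= 2 * g + 1)%nat -> u i <> 0.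
Hypothesis Hdist : forall i j, (2 <= i <= 2 * g + 1)%nat -> (2 <= j <= 2 * g + 1)%nat -> i <> j -> u i <> u j.

Let P := period m c p dp w u.
Let U := polydisc g u0 r.
Let J i := P (fun y => / (y - u i)).

Let av i (Hi : (2 <= i <= 2 * g + 1)%nat) l t (Hl : (l < m)%nat) (Ht : (0 <= t <= 1)%R) : p l t <> u i :=
  avoid_i g u0 r m p dp w u HLs Hu i Hi l t Hl Ht.
Let av0 l t (Hl : (l < m)%nat) (Ht : (0 <= t <= 1)%R) : p l t <> 0 :=
  avoid_0 g u0 r m p dp w u HLs Hu l t Hl Ht.

Lemma period_add phi1 phi2 : padm m p phi1 -> padm m p phi2 -> P (fun y => phi1 y + phi2 y) = P phi1 + P phi2.
Proof.
  intros H1 H2. unfold P.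
  rewrite (period_ext m c p dp w u _ (fun y => 1 * phi1 y + 1 * phi2 y)).
  rewrite (period_lin g m U c p dp w HLs); auto. toC. ring. intros. ring.
Qed.

Lemma padm_invk i : (2 <= i <= 2 * g + 1)%nat -> padm m p (fun y => / (y - u i)).
Proof. intros Hi. apply padm_inv. intros; apply av; auto. Qed.

Definition theta (j : nat) (y : C) : C :=
  if Nat.eqb j 1 then (- / 2) * / (y - u k) else / 2 * (y * / ((y - u k) * (y - u j))).
Definition phij (j : nat) (y : C) : C := if Nat.eqb j k then 0 else theta j y.

Lemma padm_phij j : (1 <= j <= 2 * g + 1)%nat -> padm m p (phij j).
Proof.
  intros Hj l Hl t Ht. unfold phij. destruct (Nat.eqb_spec j k). apply cc_const.
  unfold theta. destruct (Nat.eqb_spec j 1).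
  - apply cc_mult. apply cc_const. apply cc_inv. apply cc_minus. apply ccC_id. apply cc_const.
    apply nz_of_neq. apply av; auto.
  - apply cc_mult. apply cc_const. apply cc_mult. apply ccC_id. apply cc_inv.
    apply cc_mult; apply cc_minus; try apply ccC_id; apply cc_const.
    apply Cmult_neq_0; apply nz_of_neq; apply av; auto; lia.
Qed.

Lemma term_j j : (1 <= j <= 2 * g + 1)%nat ->
  m12 (if Nat.eqb j k then mzero else mscale (/ (uu u k - uu u j)) (mcomm (Amat m c p dp w u k) (Amat m c p dp w u j)))
  = P (phij j).
Proof.
  intros Hj. assert (Hk1 : Nat.eqb k 1 = false) by (apply Nat.eqb_neq; lia).
  assert (Nk := Hnz k Hk).
  unfold phij. destruct (Nat.eqb_spec j k) as [Ejk|Ejk].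
  - simpl. unfold P. rewrite (period_ext m c p dp w u _ (fun y => 0 * (fun _ => RtoC 1) y)).
    rewrite (period_scal g u0 r m c p dp w u HLs Hu). toC. ring. apply padm_const. intros. ring.
  - unfold mscale, mcomm, madd, mopp, mmul. cbn [m11 m12 m21 m22]. unfold mscale. cbn [m11 m12 m21 m22].
    unfold uu, Amat, theta. rewrite Hk1. destruct (Nat.eqb_spec j 1) as [Ej1|Ej1].
    + subst j. simpl Nat.eqb. cbn [m11 m12 m21 m22].
      rewrite acoef_1, acoef_i by lia. fold P.
      unfold P. rewrite (period_scal g u0 r m c p dp w u HLs Hu (- / 2) (fun y => / (y - u k))). fold P. fold (J k). rewrite quarter, mquarter. toC. field. auto.
      apply padm_invk; auto.
    + assert (Hj2 : (2 <= j <= 2 * g + 1)%nat) by lia.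
      assert (Hj1 : Nat.eqb j 1 = false) by (apply Nat.eqb_neq; lia).
      cbn [m11 m12 m21 m22].
      rewrite !acoef_i by lia. fold P.
      assert (N3 := Hdist k j Hk Hj2 (not_eq_sym Ejk)).
      unfold P. rewrite (period_ext m c p dp w u (fun y => / 2 * (y * / ((y - u k) * (y - u j))))
        (fun y => (/ 2 * u k / (u k - u j)) * (fun y => / (y - u k)) y + (- / 2 * u j / (u k - u j)) * (fun y => / (y - u j)) y)).
      rewrite (period_lin g m U c p dp w HLs); auto. fold P. fold (J k). fold (J j).
      rewrite quarter, mquarter. toC. field. repeat split; auto using two_nz, nz_of_neq.
      apply padm_invk; auto. apply padm_invk; auto.
      intros l Hl t Ht. assert (A1 := av k Hk l t Hl Ht). assert (A2 := av j Hj2 l t Hl Ht).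
      field. repeat split; auto using two_nz, nz_of_neq.
Qed.

Lemma deriv_diag :
  is_mderiv (fun z => Amat m c p dp w (upd u k z) k) (u k)
    (mopp (msum_from 1 (2 * g + 1) (fun j => if Nat.eqb j k then mzero
       else mscale (/ (uu u k - uu u j)) (mcomm (Amat m c p dp w u k) (Amat m c p dp w u j))))).
Proof.
  assert (Hk1 : Nat.eqb k 1 = false) by (apply Nat.eqb_neq; lia).
  assert (Nk := Hnz k Hk).
  assert (NZk : forall l t, (l < m)%nat -> (0 <= t <= 1)%R -> p l t - u k <> 0).
  { intros l t Hl Ht. apply nz_of_neq. apply av; auto. }
  assert (ccinvk : forall l t, (l < m)%nat -> (0 <= t <= 1)%R -> cc dC (fun y => / (y - u k)) (p l t)).
  { intros l t Hl Ht. apply cc_inv. apply cc_minus. apply ccC_id. apply cc_const. auto. }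
  assert (Z0 : forall (f : mat2 -> C), (f = m11 \/ f = m21 \/ f = m22) ->
     f (mopp (msum_from 1 (2 * g + 1) (fun j => if Nat.eqb j k then mzero
       else mscale (/ (uu u k - uu u j)) (mcomm (Amat m c p dp w u k) (Amat m c p dp w u j))))) = 0).
  { intros f Hf. unfold mopp, mscale.
    destruct Hf as [E|[E|E]]; subst f; cbn [m11 m21 m22];
      [rewrite m11_msum|rewrite m21_msum|rewrite m22_msum]; rewrite csum_zero; try ring;
      intros j Hj; destruct (Nat.eqb j k); try reflexivity;
      destruct (comm_diag (Amat m c p dp w u k) (Amat m c p dp w u j)) as [A1 [A2 A3]];
      try apply Amat_m21; cbn [m11 m21 m22]; [rewrite A1|rewrite A2|rewrite A3]; ring. }
  unfold is_mderiv. split; [|split; [|split]].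
  - apply const_entry. intros; apply Amat_m11. apply Z0; auto.
  - destruct (slope_one g u0 r m c p dp w u k HLs Hu Hk) as [h1 [E1 S1]].
    destruct (slope_var g u0 r m c p dp w u k HLs Hu Hk) as [h3 [E3 S3]].
    assert (SD := slopeC_plus _ _ _ _ _ S1 (slopeC_mult _ _ _ _ _ (slopeC_id (u k)) S3)).
    apply (slopeC_ext _ (fun z => m12 (Amat m c p dp w (upd u k z) k))) in SD.
    2: { intros z. rewrite Amat_m12, acoef_i by lia. rewrite upd_k. reflexivity. }
    apply slopeC_derive in SD. eapply is_deriveC_val. exact SD. cbv beta.
    rewrite E1, E3. rewrite upd_same. fold P. fold (J k).
    unfold mopp, mscale. cbn [m12]. rewrite m12_msum.
    rewrite (csum_ext _ _ _ (fun j => P (phij j))) by (intros j Hj; apply term_j; lia).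
    unfold P. rewrite <- (period_csum g m U c p dp w HLs u 1 (2 * g + 1) phij Hu)
      by (intros j Hj; apply padm_phij; lia).
    fold P.
    set (psa := fun y => 0 + 1 / (2 * (y - u k))).
    set (psc := fun y => / ((y - u k) * (y - u k)) + / (y - u k) / (2 * (y - u k))).
    set (Th := fun y => csum_from 1 (2 * g + 1) (fun j => phij j y)).
    assert (Pa : padm m p psa).
    { intros l Hl t Ht. unfold psa. apply cc_plus. apply cc_const. unfold Cdiv. apply cc_mult. apply cc_const.
      apply cc_inv. apply cc_mult. apply cc_const. apply cc_minus. apply ccC_id. apply cc_const.
      apply Cmult_neq_0. apply two_nz. auto. }
    assert (Pc : padm m p psc).
    { intros l Hl t Ht. unfold psc. apply cc_plus. apply cc_inv. apply cc_mult; apply cc_minus; try apply ccC_id; apply cc_const.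
      apply Cmult_neq_0; auto.
      unfold Cdiv. apply cc_mult. auto. apply cc_inv. apply cc_mult. apply cc_const. apply cc_minus. apply ccC_id. apply cc_const.
      apply Cmult_neq_0. apply two_nz. auto. }
    assert (PT : padm m p Th).
    { unfold Th. apply padm_csum. intros j Hj. apply padm_phij. lia. }
    assert (Pk : padm m p (fun y => / (y - u k))) by (apply padm_invk; auto).
    assert (Z : P (fun y => psa y + ((fun y => / (y - u k)) y + ((fun y => u k * psc y) y + Th y))) = 0).
    { transitivity (P (fun y => (fun y => u k * / ((y - u k) * (y - u k))) y -
                                (fun y => -1 * (y * / (y - u k))) y * Lg g u y / 2)).
      - unfold P. apply period_ext. intros l Hl t Ht. cbv beta.
        assert (N0 := av0 l t Hl Ht). assert (N1 := NZk l t Hl Ht).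
        unfold Th, psa, psc. set (y := p l t) in *.
        replace (2 * g + 1)%nat with (S (2 * g)) by lia. rewrite csum_shift1.
        assert (E1k : Nat.eqb 1 k = false) by (apply Nat.eqb_neq; lia).
        unfold phij at 1. rewrite E1k. unfold theta at 1. simpl Nat.eqb. cbv iota.
        set (C0 := / 2 * y * / (y - u k)).
        rewrite (csum_ext 2 (2 * g) (fun j => phij j y) (fun j => if Nat.eqb j k then 0 else C0 * / (y - u j))).
        2: { intros j Hj. unfold phij. destruct (Nat.eqb j k). reflexivity.
             unfold theta. assert (Ej : Nat.eqb j 1 = false) by (apply Nat.eqb_neq; lia). rewrite Ej.
             unfold C0. field. split. apply nz_of_neq. apply av; auto; lia. auto. }
        rewrite csum_skip by lia. rewrite csum_scal.
        unfold Lg. set (Sm := csum_from 2 (2 * g) (fun i => / (y - u i))).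
        unfold C0. field. split; auto.
      - unfold P. apply (period_exact g m U c p dp w HLs u); auto.
        intros l Hl t Ht. assert (N1 := NZk l t Hl Ht). split.
        + assert (SS := slopeC_cmul (-1) _ _ _ (slopeC_mult _ _ _ _ _ (slopeC_id (p l t))
                          (slopeC_inv _ _ _ (slopeC_lin (u k) (p l t)) N1))).
          apply slopeC_derive in SS. eapply is_deriveC_val. exact SS. cbv beta.
          toC. field. auto.
        + apply cc_mult. apply cc_const. apply cc_inv. apply cc_mult; apply cc_minus; try apply ccC_id; apply cc_const.
          apply Cmult_neq_0; auto. }
    rewrite !period_add in Z; auto.
    2: { intros l Hl t Ht. apply cc_mult. apply cc_const. apply Pc; auto. }
    2: { intros l Hl t Ht. apply cc_plus. apply cc_mult. apply cc_const. apply Pc; auto. apply PT; auto. }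
    2: { intros l Hl t Ht. apply cc_plus. apply Pk; auto. apply cc_plus. apply cc_mult. apply cc_const. apply Pc; auto. apply PT; auto. }
    unfold P in Z. rewrite (period_scal g u0 r m c p dp w u HLs Hu (u k) psc Pc) in Z. fold P in Z. fold (J k) in Z.
    fold Th.
    replace (P Th) with ((P psa + (J k + (u k * P psc + P Th))) - (P psa + (J k + u k * P psc))) by ring.
    rewrite Z. toC. ring.
  - apply const_entry. intros; rewrite !Amat_m21; auto. apply Z0; auto.
  - apply const_entry. intros; apply Amat_m22. apply Z0; auto.
Qed.
End Fin4.

Theorem corollary2 (g : nat) (u0 : nat -> C) (r : R)
  (m : nat) (c : nat -> C) (p dp : nat -> R -> C)
  (w : nat -> (nat -> C) -> R -> C) :
  (1 <= g)%nat -> (0 < r)%R ->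
  (forall u, polydisc g u0 r u -> forall i, (2 <= i <= 2 * g + 1)%nat -> u i <> 0) ->
  (forall u, polydisc g u0 r u -> forall i j,
      (2 <= i <= 2 * g + 1)%nat -> (2 <= j <= 2 * g + 1)%nat -> i <> j -> u i <> u j) ->
  (forall k, (k < m)%nat -> lifted_loop g (polydisc g u0 r) (p k) (dp k) (w k)) ->
  (forall u, polydisc g u0 r u -> forall k, (2 <= k <= 2 * g + 1)%nat ->
     (forall j, (1 <= j <= 2 * g + 1)%nat -> j <> k ->
        is_mderiv (fun z => Amat m c p dp w (upd u k z) j) (u k)
          (mscale (/ (uu u k - uu u j))
             (mcomm (Amat m c p dp w u k) (Amat m c p dp w u j)))) /\
     is_mderiv (fun z => Amat m c p dp w (upd u k z) k) (u k)
       (mopp (msum_from 1 (2 * g + 1) (fun j =>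
          if Nat.eqb j k then mzero
          else mscale (/ (uu u k - uu u j))
                 (mcomm (Amat m c p dp w u k) (Amat m c p dp w u j)))))) /\
  (forall u u', polydisc g u0 r u -> polydisc g u0 r u' ->
     Ainf g m c p dp w u = Ainf g m c p dp w u').
Proof.
  intros Hg Hr Hnz Hdist HLs. split.
  - intros u Hu k Hk. split.
    + intros j Hj Hjk.
      exact (deriv_offdiag g u0 r m c p dp w u k HLs Hu Hk (Hnz u Hu) (Hdist u Hu) j Hj Hjk).
    + exact (deriv_diag g u0 r m c p dp w u k HLs Hu Hk (Hnz u Hu) (Hdist u Hu)).
  - intros u u' Hu Hu'. apply (Ainf_const m c p dp w g 0 u u').
    apply (sum_acoef_zero g u0 r m c p dp w u HLs Hu).
    apply (sum_acoef_zero g u0 r m c p dp w u' HLs Hu').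
Qed.
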